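(* Let Assumption (H0) hold and consider the sequences $x_t^k$ and $\mathcal{Q}_t^k$ generated by REDDP, where $\lambda_{T,k}=0$ for every $k\ge1$ and $\lim_{k\to+\infty}\lambda_{t,k}=0$ for $t=1,\ldots,T-1$. Then $\mathcal{Q}_{T+1}(x_T^k)=\mathcal{Q}_{T+1}^k(x_T^k)$, $\mathcal{Q}_T(x_{T-1}^k)=\mathcal{Q}_T^k(x_{T-1}^k)=\underline{\mathcal{Q}}_T^k(x_{T-1}^k)$ for all $k$, and for $t=2,\ldots,T-1$, $$\lim_{k\to+\infty}\big(\mathcal{Q}_t(x_{t-1}^k)-\mathcal{Q}_t^k(x_{t-1}^k)\big)=\lim_{k\to+\infty}\big(\mathcal{Q}_t(x_{t-1}^k)-\underline{\mathcal{Q}}_t^k(x_{t-1}^k)\big)=0.$$ Moreover, (i) $\lim_{k\to+\infty}\underline{\mathcal{Q}}_1^k(x_0)=\lim_{k\to+\infty}\bar F_1^{k-1}(x_0,x_1^k,x_1^{P,k})=\mathcal{Q}_1(x_0)$, the optimal value of the problem; and (ii) every accumulation point $(x_1^*,\ldots,x_T^* )$ of the sequence $(x_1^k,\ldots,x_T^k)_k$ is an optimal solution of the problem $\min\sum_{t=1}^Tf_t(x_{t-1},x_t)$ s.t. $x_t\in X_t(x_{t-1})$, $t=1,\ldots,T$.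
   Context: Fix integers $T\ge 1$, $n,p,q\ge 1$ and $x_0\in\mathbb{R}^n$; set $\mathcal{X}_0:=\{x_0\}$. For $t=1,\ldots,T$ let $\mathcal{X}_t\subset\mathbb{R}^n$, $f_t:\mathbb{R}^n\times\mathbb{R}^n\to\mathbb{R}\cup\{+\infty\}$, $g_t=(g_{t,1},\ldots,g_{t,p}):\mathbb{R}^n\times\mathbb{R}^n\to\mathbb{R}^p$, $q\times n$ matrices $A_t,B_t$ and $b_t\in\mathbb{R}^q$. Define $X_t(x_{t-1})=\{x_t\in\mathcal{X}_t: A_tx_t+B_tx_{t-1}=b_t,\ g_t(x_{t-1},x_t)\le 0\}$; the problem is $\min\sum_{t=1}^Tf_t(x_{t-1},x_t)$ s.t. $x_t\in X_t(x_{t-1})$. Define $\mathcal{Q}_{T+1}\equiv0$ and for $t=T,\ldots,1$, $\mathcal{Q}_t(x_{t-1})=\inf\{f_t(x_{t-1},x_t)+\mathcal{Q}_{t+1}(x_t):x_t\in X_t(x_{t-1})\}$. For $\varepsilon>0$, $\mathcal{X}^\varepsilon:=\mathcal{X}+\varepsilon\mathbb{B}_n$, $\mathbb{B}_n$ the closed Euclidean unit ball. Assumption (H0): for $t=1,\ldots,T$: (a) $\mathcal{X}_t$ nonempty, convex, compact; (b) $f_t$ proper, convex, lower semicontinuous; (c) each $g_{t,i}$ convex and lower semicontinuous; (d) there is $\varepsilon>0$ with $\mathcal{X}_{t-1}^\varepsilon\times\mathcal{X}_t\subset\mathrm{dom}(f_t)$ and for every $x_{t-1}\in\mathcal{X}_{t-1}^\varepsilon$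 there is $x_t\in\mathcal{X}_t$ with $g_t(x_{t-1},x_t)\le0$, $A_tx_t+B_tx_{t-1}=b_t$; (e) if $t\ge2$, there exists $(\bar x_{t,t-1},\bar x_{t,t})\in(\mathcal{X}_{t-1}\times\mathrm{ri}(\mathcal{X}_t))\cap\mathrm{ri}(\{(y,x):g_t(y,x)\le0\})$ with $\bar x_{t,t}\in\mathcal{X}_t$, $g_t(\bar x_{t,t-1},\bar x_{t,t})\le0$, $A_t\bar x_{t,t}+B_t\bar x_{t,t-1}=b_t$. REDDP algorithm: initial functions $\mathcal{Q}_t^0:\mathcal{X}_{t-1}\to\mathbb{R}\cup\{-\infty\}$, $t=2,\ldots,T$, with $\mathcal{Q}_t^0\le\mathcal{Q}_t$ (e.g. $\mathcal{Q}_t^0\equiv-\infty$); $\mathcal{Q}_{T+1}^k\equiv0$ for all $k\ge0$. Given nonnegative penalization parameters $\lambda_{t,k}$ with $\lambda_{t,1}=0$ and $\lambda_{T,k}=0$, and arbitrary prox-centers $x_t^{P,k}\in\mathcal{X}_t$. At iteration $k=1,2,\ldots$: Forward pass: $x_0^k=x_0$ and for $t=1,\ldots,T$, $x_t^k\in\arg\min\{\bar F_t^{k-1}(x_{t-1}^k,x_t,x_t^{P,k}): x_t\in X_t(x_{t-1}^k)\}$, where $\bar F_t^{k-1}(x_{t-1},x_t,x^P)=f_t(x_{t-1},x_t)+\mathcal{Q}_{t+1}^{k-1}(x_t)+\lambda_{t,k}\|x_t-x^P\|^2$. Backward pass: for $t=T,\ldots,2$, with $\underline{\mathcal{Q}}_t^k(y):=\inf\{f_t(y,x_t)+\mathcal{Q}_{t+1}^k(x_t):x_t\in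 X_t(y)\}$, take $\beta_t^k\in\partial\underline{\mathcal{Q}}_t^k(x_{t-1}^k)$, form $\mathcal{C}_t^k(y)=\underline{\mathcal{Q}}_t^k(x_{t-1}^k)+\langle\beta_t^k,y-x_{t-1}^k\rangle$ and set $\mathcal{Q}_t^k=\max\{\mathcal{Q}_t^{k-1},\mathcal{C}_t^k\}$. Also $\underline{\mathcal{Q}}_1^k(x_0):=\inf\{f_1(x_0,x_1)+\mathcal{Q}_2^k(x_1):x_1\in X_1(x_0)\}$. *)

(* Defs.v *)
From Stdlib Require Import Reals Lra Lia List.
Open Scope R_scope.

Inductive Rbar : Type := Finite (r : R) | p_infty | m_infty.

Definition Rbar_le (x y : Rbar) : Prop :=
  match x, y with
  | m_infty, _ => True
  | _, p_infty => True
  | Finite a, Finite b => a <= b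
  | _, _ => False
  end.

Definition Rbar_lt (x y : Rbar) : Prop := Rbar_le x y /\ x <> y.

(* Convention: (+oo) + (-oo) = +oo (never used in relevant places). *)
Definition Rbar_plus (x y : Rbar) : Rbar :=
  match x, y with
  | p_infty, _ => p_infty
  | _, p_infty => p_infty
  | Finite a, Finite b => Finite (a + b)
  | _, _ => m_infty
  end.

(* scaling by a positive real *)
Definition Rbar_pscal (c : R) (x : Rbar) : Rbar :=
  match x with Finite a => Finite (c * a) | y => y end.

Definition Rbar_max (x y : Rbar) : Rbar :=
  match x, y with
  | p_infty, _ => p_infty
  | _, p_infty => p_infty
  | m_infty, y => y
  | x, m_infty => x
  | Finite a, Finite b => Finite (Rmax a b)
  end.

Definition Rbar_is_inf (S : Rbar -> Prop) (v : Rbar) : Prop :=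
  (forall w, S w -> Rbar_le v w) /\
  (forall u, (forall w, S w -> Rbar_le u w) -> Rbar_le u v).

Definition Rbar_cv (u : nat -> Rbar) (l : Rbar) : Prop :=
  match l with
  | Finite r => forall eps, eps > 0 -> exists N, forall k, (N <= k)%nat ->
                  exists a, u k = Finite a /\ Rabs (a - r) < eps
  | p_infty => forall M, exists N, forall k, (N <= k)%nat -> Rbar_lt (Finite M) (u k)
  | m_infty => forall M, exists N, forall k, (N <= k)%nat -> Rbar_lt (u k) (Finite M)
  end.

Definition Rbar_diff_cv0 (u v : nat -> Rbar) : Prop :=
  forall eps, eps > 0 -> exists N, forall k, (N <= k)%nat ->
    exists a b, u k = Finite a /\ v k = Finite b /\ Rabs (a - b) < eps.

Fixpoint rsum (k : nat) (h : nat -> R) : R :=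
  match k with O => 0 | S k' => rsum k' h + h k' end.

Record vec (m : nat) : Type := mkvec {
  vf :> nat -> R ;
  vsupp : forall i, (m <= i)%nat -> vf i = 0 }.
Arguments mkvec {m} _ _.
Arguments vf {m} _ _.
Arguments vsupp {m} _ _ _.

Definition vzero {m} : vec m.
Proof. refine (mkvec (fun _ => 0) _). intros; reflexivity. Defined.

Definition vadd {m} (u v : vec m) : vec m.
Proof.
  refine (mkvec (fun i => u i + v i) _).
  intros i Hi. rewrite (vsupp u i Hi), (vsupp v i Hi). ring.
Defined.

Definition vscal {m} (c : R) (u : vec m) : vec m.
Proof.
  refine (mkvec (fun i => c * u i) _).
  intros i Hi. rewrite (vsupp u i Hi). ring.
Defined.

Definition vsub {m} (u v : vec m) : vec m := vadd u (vscal (-1) v).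

Definition vinner {m} (u v : vec m) : R := rsum m (fun i => u i * v i).

Definition vnorm {m} (u : vec m) : R := sqrt (vinner u u).

Definition vleft {m} (z : vec (m + m)) : vec m.
Proof.
  refine (mkvec (fun i => if Nat.ltb i m then z i else 0) _).
  intros i Hi. destruct (Nat.ltb_spec i m); [lia | reflexivity].
Defined.

Definition vright {m} (z : vec (m + m)) : vec m.
Proof.
  refine (mkvec (fun i => if Nat.ltb i m then z (m + i)%nat else 0) _).
  intros i Hi. destruct (Nat.ltb_spec i m); [lia | reflexivity].
Defined.

(* a function of (y, x) in R^m x R^m viewed as a function on R^(m+m) *)
Definition uncurry2 {m} {Y} (h : vec m -> vec m -> Y) : vec (m + m) -> Y :=
  fun z => h (vleft z) (vright z).

Definition vconv {m} (s : nat -> vec m) (l : vec m) : Prop :=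
  forall eps, eps > 0 -> exists N, forall k, (N <= k)%nat -> vnorm (vsub (s k) l) < eps.

Definition is_open {m} (U : vec m -> Prop) : Prop :=
  forall x, U x -> exists d, d > 0 /\ forall y, vnorm (vsub y x) < d -> U y.

Definition is_compact {m} (S : vec m -> Prop) : Prop :=
  forall (I : Type) (U : I -> vec m -> Prop),
    (forall i, is_open (U i)) ->
    (forall x, S x -> exists i, U i x) ->
    exists l : list I, forall x, S x -> exists i, In i l /\ U i x.

Definition is_convex_set {m} (S : vec m -> Prop) : Prop :=
  forall u v c, S u -> S v -> 0 <= c <= 1 ->
    S (vadd (vscal c u) (vscal (1 - c) v)).

Definition nonempty {m} (S : vec m -> Prop) : Prop := exists x, S x.

Definition is_convex_fun {m} (h : vec m -> Rbar) : Prop :=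
  forall u v c, 0 < c < 1 ->
    Rbar_le (h (vadd (vscal c u) (vscal (1 - c) v)))
            (Rbar_plus (Rbar_pscal c (h u)) (Rbar_pscal (1 - c) (h v))).

Definition is_lsc {m} (h : vec m -> Rbar) : Prop :=
  forall x r, Rbar_lt (Finite r) (h x) ->
    exists d, d > 0 /\ forall y, vnorm (vsub y x) < d -> Rbar_lt (Finite r) (h y).

Definition is_proper {m} (h : vec m -> Rbar) : Prop :=
  (forall x, h x <> m_infty) /\ (exists x, h x <> p_infty).

Definition inflate {m} (S : vec m -> Prop) (eps : R) : vec m -> Prop :=
  fun y => exists x, S x /\ vnorm (vsub y x) <= eps.

Fixpoint lincomb {m} (l : list (R * vec m)) : vec m :=
  match l with nil => vzero | cons (c, p) l' => vadd (vscal c p) (lincomb l') end.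

Fixpoint coefsum {m} (l : list (R * vec m)) : R :=
  match l with nil => 0 | cons (c, _) l' => c + coefsum l' end.

Definition aff_hull {m} (S : vec m -> Prop) : vec m -> Prop :=
  fun y => exists l : list (R * vec m),
    (forall cp, In cp l -> S (snd cp)) /\ coefsum l = 1 /\ y = lincomb l.

Definition rel_interior {m} (S : vec m -> Prop) : vec m -> Prop :=
  fun x => S x /\ exists d, d > 0 /\
    forall y, aff_hull S y -> vnorm (vsub y x) < d -> S y.

Definition subgrad {m} (h : vec m -> Rbar) (x beta : vec m) : Prop :=
  exists r, h x = Finite r /\
    forall y, Rbar_le (Finite (r + vinner beta (vsub y x))) (h y).

Section Problem.
Variables (n p q : nat).
Variable (x0 : vec n).
Variable (X : nat -> vec n -> Prop).
Variable (f : nat -> vec n -> vec n -> Rbar).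
Variable (g : nat -> nat -> vec n -> vec n -> R).  (* g t i, i = 0..p-1 *)
Variables (A B : nat -> nat -> nat -> R).        (* A t i j : q x n *)
Variable (b : nat -> vec q).

Definition lin_ok (t : nat) (y x : vec n) : Prop :=
  forall i, (i < q)%nat ->
    rsum n (fun j => A t i j * x j) + rsum n (fun j => B t i j * y j) = b t i.

Definition g_ok (t : nat) (y x : vec n) : Prop :=
  forall i, (i < p)%nat -> g t i y x <= 0.

Definition Xset (t : nat) (y x : vec n) : Prop :=
  X t x /\ lin_ok t y x /\ g_ok t y x.

Definition H0 (T : nat) : Prop :=
  forall t, (1 <= t <= T)%nat ->
    (nonempty (X t) /\ is_convex_set (X t) /\ is_compact (X t)) /\
    (is_proper (uncurry2 (f t)) /\ is_convex_fun (uncurry2 (f t))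
               /\ is_lsc (uncurry2 (f t))) /\
    (forall i, (i < p)%nat ->
                 is_convex_fun (uncurry2 (fun y x => Finite (g t i y x))) /\
                 is_lsc (uncurry2 (fun y x => Finite (g t i y x)))) /\
    (exists eps, eps > 0 /\
                 (forall y x, inflate (X (t - 1)) eps y -> X t x -> f t y x <> p_infty) /\
                 (forall y, inflate (X (t - 1)) eps y ->
                    exists x, X t x /\ g_ok t y x /\ lin_ok t y x)) /\
    ((2 <= t)%nat ->
                 exists z : vec (n + n),
                   X (t - 1) (vleft z) /\ rel_interior (X t) (vright z) /\
                   rel_interior (fun w : vec (n + n) => g_ok t (vleft w) (vright w)) z /\
                   X t (vright z) /\ g_ok t (vleft z) (vright z) /\
                   lin_ok t (vleft z) (vright z)).

Definition traj (z : nat -> vec n) (t : nat) : vec n :=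
  match t with O => x0 | _ => z t end.

Fixpoint cost_upto (z : nat -> vec n) (t : nat) : Rbar :=
  match t with
  | O => Finite 0
  | S t' => Rbar_plus (cost_upto z t') (f (S t') (traj z t') (traj z (S t')))
  end.

Definition feasible (T : nat) (z : nat -> vec n) : Prop :=
  forall t, (1 <= t <= T)%nat -> Xset t (traj z (t - 1)) (traj z t).

Definition optimal_solution (T : nat) (z : nat -> vec n) : Prop :=
  feasible T z /\ forall w, feasible T w -> Rbar_le (cost_upto z T) (cost_upto w T).

Definition optimal_value (T : nat) (v : Rbar) : Prop :=
  Rbar_is_inf (fun c => exists w, feasible T w /\ c = cost_upto w T) v.

Definition Fbar (Qk : nat -> nat -> vec n -> Rbar) (lam : nat -> nat -> R)
  (t k : nat) (y z P : vec n) : Rbar :=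
  Rbar_plus (Rbar_plus (f t y z) (Qk (t + 1)%nat (k - 1)%nat z))
            (Finite (lam t k * (vnorm (vsub z P)) ^ 2)).

End Problem.

(* Main.v *)
Require Import Defs.
From Stdlib Require Import Reals Lra Lia List.
From Stdlib Require Import FunctionalExtensionality ProofIrrelevance Classical ZArith.
Open Scope R_scope.

Lemma vec_ext {m} (u v : vec m) : (forall i, u i = v i) -> u = v.
Proof.
  destruct u as [fu pu], v as [fv pv]; simpl; intros H.
  assert (fu = fv) by (apply functional_extensionality; exact H). subst fv.
  f_equal. apply proof_irrelevance.
Qed.

Lemma vadd_i {m} (u v : vec m) i : vadd u v i = u i + v i.
Proof. reflexivity. Qed.
Lemma vscal_i {m} c (u : vec m) i : vscal c u i = c * u i.
Proof. reflexivity. Qed.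
Lemma vsub_i {m} (u v : vec m) i : vsub u v i = u i - v i.
Proof. unfold vsub. rewrite vadd_i, vscal_i. ring. Qed.
Lemma vzero_i {m} i : (@vzero m) i = 0.
Proof. reflexivity. Qed.

Definition comb {m} (c : R) (u v : vec m) : vec m := vadd (vscal c u) (vscal (1 - c) v).
Lemma comb_i {m} c (u v : vec m) i : comb c u v i = c * u i + (1 - c) * v i.
Proof. reflexivity. Qed.

Lemma comb_1 {m} (u v : vec m) : comb 1 u v = u.
Proof. apply vec_ext; intro i; rewrite comb_i; ring. Qed.
Lemma comb_0 {m} (u v : vec m) : comb 0 u v = v.
Proof. apply vec_ext; intro i; rewrite comb_i; ring. Qed.

Lemma vout {m} (u : vec m) i : (m <= i)%nat -> u i = 0.
Proof. apply vsupp. Qed.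

Definition vpair {m} (y x : vec m) : vec (m + m).
Proof.
  refine (mkvec (fun i => if Nat.ltb i m then y i else x (i - m)%nat) _).
  intros i Hi. destruct (Nat.ltb_spec i m); [lia|]. apply vsupp. lia.
Defined.

Lemma vpair_i {m} (y x : vec m) i :
  vpair y x i = if Nat.ltb i m then y i else x (i - m)%nat.
Proof. reflexivity. Qed.

Lemma vleft_pair {m} (y x : vec m) : vleft (vpair y x) = y.
Proof.
  apply vec_ext; intro i. simpl.
  destruct (Nat.ltb_spec i m); [reflexivity|]. symmetry; apply vsupp; lia.
Qed.

Lemma vright_pair {m} (y x : vec m) : vright (vpair y x) = x.
Proof.
  apply vec_ext; intro i. simpl.
  destruct (Nat.ltb_spec i m).
  - destruct (Nat.ltb_spec (m + i) m); [lia|]. f_equal; lia.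
  - symmetry; apply vsupp; lia.
Qed.

Lemma uncurry2_pair {m} {Y} (h : vec m -> vec m -> Y) y x :
  uncurry2 h (vpair y x) = h y x.
Proof. unfold uncurry2. rewrite vleft_pair, vright_pair. reflexivity. Qed.

Lemma comb_pair {m} c (y1 x1 y2 x2 : vec m) :
  comb c (vpair y1 x1) (vpair y2 x2) = vpair (comb c y1 y2) (comb c x1 x2).
Proof.
  apply vec_ext; intro i. rewrite comb_i, !vpair_i.
  destruct (Nat.ltb i m); rewrite comb_i; reflexivity.
Qed.

Lemma rsum_ext k h1 h2 : (forall i, (i < k)%nat -> h1 i = h2 i) -> rsum k h1 = rsum k h2.
Proof.
  induction k; simpl; intros H; [reflexivity|].
  rewrite IHk by (intros; apply H; lia). rewrite H by lia. reflexivity.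
Qed.

Lemma rsum_le k h1 h2 : (forall i, (i < k)%nat -> h1 i <= h2 i) -> rsum k h1 <= rsum k h2.
Proof.
  induction k; simpl; intros H; [lra|].
  assert (rsum k h1 <= rsum k h2) by (apply IHk; intros; apply H; lia).
  assert (h1 k <= h2 k) by (apply H; lia). lra.
Qed.

Lemma rsum_lin k a b h1 h2 :
  rsum k (fun i => a * h1 i + b * h2 i) = a * rsum k h1 + b * rsum k h2.
Proof. induction k; simpl; [ring|]. rewrite IHk. ring. Qed.

Lemma rsum_plus k h1 h2 : rsum k (fun i => h1 i + h2 i) = rsum k h1 + rsum k h2.
Proof. induction k; simpl; [ring|]. rewrite IHk. ring. Qed.

Lemma rsum_scal k a h : rsum k (fun i => a * h i) = a * rsum k h.
Proof. induction k; simpl; [ring|]. rewrite IHk. ring. Qed.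

Lemma rsum_const k c : rsum k (fun _ => c) = INR k * c.
Proof. induction k; simpl rsum; [simpl; ring|]. rewrite IHk, S_INR. ring. Qed.

Lemma rsum_nonneg k h : (forall i, (i < k)%nat -> 0 <= h i) -> 0 <= rsum k h.
Proof.
  intros H. replace 0 with (rsum k (fun _ => 0)).
  - apply rsum_le; auto.
  - rewrite rsum_const; ring.
Qed.

Lemma rsum_term k h j : (forall i, (i < k)%nat -> 0 <= h i) -> (j < k)%nat -> h j <= rsum k h.
Proof.
  induction k; simpl; intros H Hj; [lia|].
  assert (0 <= rsum k h) by (apply rsum_nonneg; intros; apply H; lia).
  destruct (Nat.eq_dec j k).
  - subst. lra.
  - assert (h j <= rsum k h) by (apply IHk; [intros; apply H; lia | lia]).
    assert (0 <= h k) by (apply H; lia). lra.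
Qed.

Lemma rsum_abs k h : Rabs (rsum k h) <= rsum k (fun i => Rabs (h i)).
Proof.
  induction k; simpl; [rewrite Rabs_R0; lra|].
  eapply Rle_trans; [apply Rabs_triang|]. lra.
Qed.

Lemma vinner_sq_nonneg {m} (u : vec m) : 0 <= vinner u u.
Proof. unfold vinner. apply rsum_nonneg. intros. nra. Qed.

Lemma vnorm_sq {m} (u : vec m) : vnorm u ^ 2 = vinner u u.
Proof. unfold vnorm. rewrite pow2_sqrt; [reflexivity| apply vinner_sq_nonneg]. Qed.

Lemma vnorm_nonneg {m} (u : vec m) : 0 <= vnorm u.
Proof. unfold vnorm. apply sqrt_pos. Qed.

Lemma coord_le_norm {m} (u : vec m) i : Rabs (u i) <= vnorm u.
Proof.
  destruct (Nat.lt_ge_cases i m) as [Hi|Hi].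
  - unfold vnorm. rewrite <- sqrt_Rsqr_abs. apply sqrt_le_1_alt.
    unfold Rsqr. unfold vinner.
    apply (rsum_term m (fun i => u i * u i) i); [intros; nra | exact Hi].
  - rewrite (vsupp u i Hi), Rabs_R0. apply vnorm_nonneg.
Qed.

Lemma norm_le_coords {m} (u : vec m) d :
  (1 <= m)%nat -> (forall i, (i < m)%nat -> Rabs (u i) <= d) -> vnorm u <= INR m * d.
Proof.
  intros Hm H.
  assert (Hd : 0 <= d) by (eapply Rle_trans; [apply Rabs_pos | apply (H 0%nat); lia]).
  assert (H1 : 1 <= INR m) by (apply (le_INR 1); lia).
  unfold vnorm. rewrite <- (sqrt_square (INR m * d)) by nra.
  apply sqrt_le_1_alt. unfold vinner.
  eapply Rle_trans.
  - apply (rsum_le m _ (fun _ => d * d)). intros i Hi.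
    specialize (H i Hi). assert (0 <= Rabs (u i)) by apply Rabs_pos.
    assert (u i * u i = Rabs (u i) * Rabs (u i)) as ->.
    { rewrite <- Rabs_mult. rewrite Rabs_right; [ring | nra]. }
    nra.
  - rewrite rsum_const. nra.
Qed.
Lemma Rbar_le_refl x : Rbar_le x x.
Proof. destruct x; simpl; auto; lra. Qed.

Lemma Rbar_le_trans x y z : Rbar_le x y -> Rbar_le y z -> Rbar_le x z.
Proof. destruct x, y, z; simpl; auto; try lra; tauto. Qed.

Lemma Rbar_le_total x y : ~ Rbar_le x y -> Rbar_le y x.
Proof. destruct x, y; simpl; auto; try tauto; intros; lra. Qed.

Lemma Rbar_le_fin a b : Rbar_le (Finite a) (Finite b) <-> a <= b.
Proof. simpl; tauto. Qed.

Lemma Rbar_plus_fin a b : Rbar_plus (Finite a) (Finite b) = Finite (a + b).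
Proof. reflexivity. Qed.

Lemma Rbar_plus_0 x : Rbar_plus x (Finite 0) = x.
Proof. destruct x; simpl; auto. f_equal; ring. Qed.

Lemma Rbar_max_l x y : Rbar_le x (Rbar_max x y).
Proof. destruct x, y; simpl; auto; try lra. apply Rmax_l. Qed.

Lemma Rbar_max_r x y : Rbar_le y (Rbar_max x y).
Proof. destruct x, y; simpl; auto; try lra. apply Rmax_r. Qed.

Lemma Rbar_max_lub x y z : Rbar_le x z -> Rbar_le y z -> Rbar_le (Rbar_max x y) z.
Proof.
  destruct x, y, z; simpl; auto; try tauto. intros. apply Rmax_lub; auto.
Qed.

Lemma Rbar_le_fin_ex x a : Rbar_le x (Finite a) -> x <> m_infty -> exists r, x = Finite r /\ r <= a.
Proof. destruct x; simpl; try tauto. intros; eauto. Qed.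

Lemma Rbar_ge_fin_ex x a : Rbar_le (Finite a) x -> x <> p_infty -> exists r, x = Finite r /\ a <= r.
Proof. destruct x; simpl; try tauto. intros; eauto. Qed.

Lemma inf_lb S v w : Rbar_is_inf S v -> S w -> Rbar_le v w.
Proof. intros [H _]; auto. Qed.

Lemma inf_glb S v u : Rbar_is_inf S v -> (forall w, S w -> Rbar_le u w) -> Rbar_le u v.
Proof. intros [_ H]; auto. Qed.

Lemma inf_approx S a eps : Rbar_is_inf S (Finite a) -> eps > 0 ->
  exists w, S w /\ Rbar_le w (Finite (a + eps)).
Proof.
  intros Hinf Heps. apply NNPP. intros Hn.
  assert (Rbar_le (Finite (a + eps)) (Finite a)).
  { apply (inf_glb S); auto. intros w Hw. apply Rbar_le_total. intros Hle. apply Hn; eauto. }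
  simpl in H. lra.
Qed.

Lemma Rbar_le_eps x a : (forall eps, eps > 0 -> Rbar_le x (Finite (a + eps))) -> Rbar_le x (Finite a).
Proof.
  destruct x; simpl; auto.
  - intros H. apply Rnot_lt_le. intros Hlt. specialize (H ((r - a)/2)). 
    assert (r <= a + (r - a) / 2) by (apply H; lra). lra.
  - intros H. apply (H 1); lra.
Qed.

Lemma Rbar_plus_le_fin x y a b : Rbar_le x (Finite a) -> Rbar_le y (Finite b) ->
  Rbar_le (Rbar_plus x y) (Finite (a + b)).
Proof. destruct x, y; simpl; auto; try tauto. lra. Qed.

Lemma Rbar_plus_ge_fin x y a b : Rbar_le (Finite a) x -> Rbar_le (Finite b) y ->
  Rbar_le (Finite (a + b)) (Rbar_plus x y).
Proof. destruct x, y; simpl; auto; try tauto. lra. Qed.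

Lemma Rbar_le_antisym_fin a b : Rbar_le a b -> Rbar_le b a -> a = b.
Proof. destruct a, b; simpl; try tauto. intros. f_equal. lra. Qed.

Lemma inf_unique S v w : Rbar_is_inf S v -> Rbar_is_inf S w -> v = w.
Proof.
  intros H1 H2. apply Rbar_le_antisym_fin.
  - apply (inf_glb S w v H2). intros; eapply inf_lb; eauto.
  - apply (inf_glb S v w H1). intros; eapply inf_lb; eauto.
Qed.
Lemma nat_large r : exists N : nat, r < INR N.
Proof.
  destruct (archimed r) as [H1 _].
  destruct (Z.le_gt_cases (up r) 0) as [Hz|Hz].
  - exists 0%nat. simpl. apply IZR_le in Hz. lra.
  - exists (Z.to_nat (up r)). rewrite INR_IZR_INZ, Z2Nat.id by lia. lra.
Qed.

Lemma nat_small e : e > 0 -> exists N : nat, 1 / (INR N + 1) < e.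
Proof.
  intros He. destruct (nat_large (1 / e)) as [N HN]. exists N.
  pose proof (pos_INR N).
  apply (Rmult_lt_reg_r (INR N + 1)); [lra|].
  unfold Rdiv. rewrite Rmult_assoc, Rinv_l by lra.
  assert (1 / e * e = 1) by (field; lra).
  assert (1 / e * e < (INR N + 1) * e) by (apply Rmult_lt_compat_r; lra). lra.
Qed.

Lemma finite_slack k (a : nat -> R) r : (forall i, (i < k)%nat -> a i < r) ->
  exists d, d > 0 /\ forall i, (i < k)%nat -> a i + d <= r.
Proof.
  induction k; intros H.
  - exists 1. split; [lra | intros; lia].
  - destruct IHk as [d [Hd Hd']]; [intros; apply H; lia|].
    assert (a k < r) by (apply H; lia).
    exists (Rmin d (r - a k)). split.
    + apply Rmin_pos; lra.
    + intros i Hi. destruct (Nat.eq_dec i k).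
      * subst. pose proof (Rmin_r d (r - a k)). lra.
      * pose proof (Rmin_l d (r - a k)). specialize (Hd' i ltac:(lia)). lra.
Qed.

Lemma finite_bound k (a : nat -> R) : exists N : nat, forall i, (i < k)%nat -> a i < INR N.
Proof.
  induction k.
  - exists 0%nat. intros; lia.
  - destruct IHk as [N HN]. destruct (nat_large (a k)) as [N' HN'].
    exists (Nat.max N N'). intros i Hi.
    destruct (Nat.eq_dec i k).
    + subst. eapply Rlt_le_trans; [exact HN'|]. apply le_INR; lia.
    + eapply Rlt_le_trans; [apply HN; lia|]. apply le_INR; lia.
Qed.

Lemma list_nat_max (l : list nat) : forall N, In N l -> (N <= fold_right Nat.max 0%nat l)%nat.
Proof.
  induction l; simpl; intros N H; [tauto|]. destruct H; [subst; lia|]. specialize (IHl N H); lia.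
Qed.

Lemma is_open_and {m} (P : Prop) (U : vec m -> Prop) : is_open U -> is_open (fun y => P /\ U y).
Proof.
  intros HU y [HP Hy]. destruct (HU y Hy) as [d [Hd H]]. exists d; split; auto.
Qed.

Lemma coord_sub_le {m} (w y : vec m) i : Rabs (w i - y i) <= vnorm (vsub w y).
Proof. rewrite <- vsub_i. apply coord_le_norm. Qed.

Lemma box_open {m} (x : vec m) r :
  is_open (fun y : vec m => forall i, (i < m)%nat -> Rabs (y i - x i) < r).
Proof.
  intros y Hy. destruct (finite_slack m (fun i => Rabs (y i - x i)) r Hy) as [d [Hd Hd']].
  exists d. split; auto. intros w Hw i Hi.
  pose proof (coord_sub_le w y i). specialize (Hd' i Hi).
  replace (w i - x i) with ((w i - y i) + (y i - x i)) by ring.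
  eapply Rle_lt_trans; [apply Rabs_triang|]. lra.
Qed.

Lemma compact_bounded {m} (S : vec m -> Prop) : is_compact S ->
  exists R, 0 <= R /\ forall y, S y -> forall i, Rabs (y i) <= R.
Proof.
  intros HS.
  destruct (HS nat (fun N y => forall i, (i < m)%nat -> Rabs (y i - (@vzero m) i) < INR N)) as [l Hl].
  - intros N. apply box_open.
  - intros y _. destruct (finite_bound m (fun i => Rabs (y i - (@vzero m) i))) as [N HN]. eauto.
  - exists (INR (fold_right Nat.max 0%nat l)). split; [apply pos_INR|].
    intros y Hy i. destruct (Hl y Hy) as [N [HN HU]].
    destruct (Nat.lt_ge_cases i m) as [Hi|Hi].
    + specialize (HU i Hi). rewrite vzero_i, Rminus_0_r in HU.
      pose proof (le_INR _ _ (list_nat_max l N HN)). lra.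
    + rewrite (vsupp y i Hi), Rabs_R0. apply pos_INR.
Qed.

Lemma vconv_coord {m} (s : nat -> vec m) l i : vconv s l ->
  forall eps, eps > 0 -> exists N, forall k, (N <= k)%nat -> Rabs (s k i - l i) < eps.
Proof.
  intros H eps Heps. destruct (H eps Heps) as [N HN]. exists N. intros k Hk.
  eapply Rle_lt_trans; [apply coord_sub_le | apply HN; auto].
Qed.

Lemma compact_closed {m} (S : vec m -> Prop) (s : nat -> vec m) l :
  is_compact S -> (forall j, S (s j)) -> vconv s l -> S l.
Proof.
  intros HS Hs Hc. apply NNPP. intros Hl.
  destruct (HS nat (fun N y => exists i, (i < m)%nat /\ 1 / (INR N + 1) < Rabs (y i - l i))) as [L HL].
  - intros N y [i [Hi Hy]].
    exists (Rabs (y i - l i) - 1 / (INR N + 1)). split; [lra|].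
    intros w Hw. exists i. split; auto.
    pose proof (coord_sub_le w y i).
    assert (Rabs (y i - l i) <= Rabs (w i - y i) + Rabs (w i - l i)).
    { replace (y i - l i) with (-(w i - y i) + (w i - l i)) by ring.
      eapply Rle_trans; [apply Rabs_triang|]. rewrite Rabs_Ropp. lra. }
    lra.
  - intros y Hy.
    assert (Hne : exists i, (i < m)%nat /\ y i <> l i).
    { apply NNPP. intros Hn. apply Hl. replace l with y; auto. apply vec_ext. intros i.
      destruct (Nat.lt_ge_cases i m) as [Hi|Hi].
      - apply NNPP. intros Hne. apply Hn. eauto.
      - rewrite !vsupp by auto. reflexivity. }
    destruct Hne as [i [Hi Hne]].
    assert (Rabs (y i - l i) > 0) by (apply Rabs_pos_lt; lra).
    destruct (nat_small _ H) as [N HN]. exists N, i. auto.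
  - set (N0 := fold_right Nat.max 0%nat L).
    assert (He : 1 / (INR N0 + 1) > 0).
    { pose proof (pos_INR N0). apply Rdiv_lt_0_compat; lra. }
    destruct (Hc _ He) as [k Hk]. specialize (Hk k (le_n k)).
    destruct (HL (s k) (Hs k)) as [N [HN [i [Hi Hlt]]]].
    pose proof (coord_sub_le (s k) l i).
    assert (1 / (INR N0 + 1) <= 1 / (INR N + 1)).
    { pose proof (le_INR _ _ (list_nat_max L N HN)). fold N0 in H0. pose proof (pos_INR N).
      apply Rmult_le_compat_l; [lra|]. apply Rinv_le_contravar; lra. }
    lra.
Qed.
Lemma compact_repeat {m} (S : vec m -> Prop) (y : nat -> vec m) d N :
  is_compact S -> (forall k, (1 <= k)%nat -> S (y k)) -> d > 0 ->
  exists K, forall k, (K <= k)%nat -> exists j, (N <= j)%nat /\ (j < k)%nat /\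
     forall i, (i < m)%nat -> Rabs (y k i - y j i) < 2 * d.
Proof.
  intros HS Hy Hd.
  set (U := fun (x : vec m) (w : vec m) => S x /\ forall i, (i < m)%nat -> Rabs (w i - x i) < d).
  destruct (HS (vec m) U) as [l Hl].
  - intros x. apply is_open_and, box_open.
  - intros x Hx. exists x. split; auto. intros i _. unfold Rminus; rewrite Rplus_opp_r, Rabs_R0. lra.
  - assert (HK : forall l : list (vec m), exists K, forall x, In x l -> forall k, (K <= k)%nat ->
        U x (y k) -> exists j, (N <= j)%nat /\ (j < k)%nat /\ U x (y j)).
    { induction l0 as [|x l0 IH].
      - exists 0%nat. simpl; tauto.
      - destruct IH as [K HK].
        destruct (classic (exists k0, (N <= k0)%nat /\ U x (y k0))) as [[k0 [Hk0 HU]]|Hno].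
        + exists (Nat.max K (k0 + 1)%nat). intros x' Hx' k Hk HUk. destruct Hx' as [<-|Hx'].
          * exists k0. split; [lia|]. split; [lia|]. exact HU.
          * apply HK; auto; lia.
        + exists (Nat.max K N). intros x' Hx' k Hk HUk. destruct Hx' as [<-|Hx'].
          * exfalso. apply Hno. exists k. split; auto; lia.
          * apply HK; auto; lia. }
    destruct (HK l) as [K HK'].
    exists (Nat.max K 1). intros k Hk.
    destruct (Hl (y k) (Hy k ltac:(lia))) as [x [Hx HUx]].
    destruct (HK' x Hx k ltac:(lia) HUx) as [j [Hj1 [Hj2 HUj]]].
    exists j. repeat split; auto. intros i Hi.
    destruct HUx as [_ H1]. destruct HUj as [_ H2]. specialize (H1 i Hi). specialize (H2 i Hi).
    replace (y k i - y j i) with ((y k i - x i) - (y j i - x i)) by ring.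
    eapply Rle_lt_trans; [apply Rabs_triang|]. rewrite Rabs_Ropp. lra.
Qed.


Lemma compact_unif_bound {m} (S : vec m -> Prop) (F : vec m -> Rbar) h :
  is_compact S -> h > 0 ->
  (forall x, S x -> exists M, forall w : vec m, (forall i, (i < m)%nat -> Rabs (w i - x i) <= h) ->
      Rbar_le (F w) (Finite M)) ->
  exists M, forall y, S y -> forall w : vec m, (forall i, (i < m)%nat -> Rabs (w i - y i) <= h / 2) ->
      Rbar_le (F w) (Finite M).
Proof.
  intros HS Hh Hloc.
  set (U := fun (xM : vec m * R) (y : vec m) =>
     (S (fst xM) /\ forall w : vec m, (forall i, (i < m)%nat -> Rabs (w i - fst xM i) <= h) ->
        Rbar_le (F w) (Finite (snd xM))) /\
     forall i, (i < m)%nat -> Rabs (y i - fst xM i) < h / 2).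
  destruct (HS _ U) as [l Hl].
  - intros xM. apply is_open_and, box_open.
  - intros y Hy. destruct (Hloc y Hy) as [M HM]. exists (y, M). split; [split; auto|].
    intros i _. simpl. unfold Rminus; rewrite Rplus_opp_r, Rabs_R0. lra.
  - set (Mx := fold_right (fun xM acc => Rmax (snd xM) acc) 0 l).
    assert (HMx : forall xM, In xM l -> snd xM <= Mx).
    { unfold Mx. clear. induction l as [|a l IH]; simpl; [tauto|].
      intros xM [<-|H]; [apply Rmax_l|]. eapply Rle_trans; [apply IH; auto|apply Rmax_r]. }
    exists Mx. intros y Hy w Hw.
    destruct (Hl y Hy) as [[x M] [Hin [[_ HB] Hbox]]]. simpl in *.
    eapply Rbar_le_trans.
    + apply HB. intros i Hi. specialize (Hw i Hi). specialize (Hbox i Hi).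
      replace (w i - x i) with ((w i - y i) + (y i - x i)) by ring.
      eapply Rle_trans; [apply Rabs_triang|]. lra.
    + simpl. apply (HMx (x, M)). auto.
Qed.
Definition cube {m} (z : vec m) (h : R) (w : vec m) : Prop :=
  forall i, (i < m)%nat -> Rabs (w i - z i) <= h.

Definition sgnv {m} (v : vec m) : vec m.
Proof.
  refine (mkvec (fun i => if Nat.ltb i m then (if Rle_dec 0 (v i) then 1 else -1) else 0) _).
  intros i Hi. destruct (Nat.ltb_spec i m); [lia | reflexivity].
Defined.

Lemma vinner_bound {m} (a v : vec m) c : (forall i, (i < m)%nat -> Rabs (v i) <= c) ->
  Rabs (vinner a v) <= rsum m (fun i => Rabs (a i)) * c.
Proof.
  intros H. unfold vinner. eapply Rle_trans; [apply rsum_abs|].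
  rewrite Rmult_comm, <- rsum_scal. apply rsum_le. intros i Hi.
  rewrite Rabs_mult. specialize (H i Hi). pose proof (Rabs_pos (a i)). nra.
Qed.

Lemma vinner_sgn {m} (a z : vec m) h :
  vinner a (vsub (vadd z (vscal h (sgnv a))) z) = h * rsum m (fun i => Rabs (a i)).
Proof.
  unfold vinner. rewrite <- rsum_scal. apply rsum_ext. intros i Hi.
  rewrite vsub_i, vadd_i, vscal_i. simpl. destruct (Nat.ltb_spec i m); [|lia].
  destruct (Rle_dec 0 (a i)).
  - rewrite Rabs_right by lra. ring.
  - rewrite Rabs_left by lra. ring.
Qed.

Lemma cube_sgn {m} (a z : vec m) h : 0 <= h -> cube z h (vadd z (vscal h (sgnv a))).
Proof.
  intros Hh i Hi. rewrite vadd_i, vscal_i. simpl. destruct (Nat.ltb_spec i m); [|lia].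
  replace (z i + h * (if Rle_dec 0 (a i) then 1 else -1) - z i)
    with (h * (if Rle_dec 0 (a i) then 1 else -1)) by ring.
  rewrite Rabs_mult, Rabs_right by lra.
  destruct (Rle_dec 0 (a i)); [rewrite Rabs_R1 | rewrite Rabs_left by lra]; lra.
Qed.

Lemma cube_refl {m} (z : vec m) h : 0 <= h -> cube z h z.
Proof. intros Hh i _. unfold Rminus; rewrite Rplus_opp_r, Rabs_R0; lra. Qed.

Lemma lipschitz_step {m} (S : vec m -> Prop) (Qf : vec m -> R) h M mm (z w : vec m) :
  h > 0 -> S z ->
  (forall z, S z -> mm <= Qf z) ->
  (forall z, S z -> forall w : vec m, cube z h w -> Qf w <= M) ->
  (forall z, S z -> forall w : vec m, cube z h w -> forall c, 0 <= c <= 1 ->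
       Qf (comb c w z) <= c * Qf w + (1 - c) * Qf z) ->
  rsum m (fun i => Rabs (w i - z i)) <= h ->
  Qf w <= Qf z + rsum m (fun i => Rabs (w i - z i)) / h * (M - mm).
Proof.
  intros Hh Hz Hmm HM Hconv Hrho.
  set (rho := rsum m (fun i => Rabs (w i - z i))) in *.
  assert (Hr0 : 0 <= rho) by (apply rsum_nonneg; intros; apply Rabs_pos).
  assert (Hmz : mm <= Qf z) by auto.
  assert (HMz : Qf z <= M) by (apply (HM z); auto; apply cube_refl; lra).
  destruct (Req_dec rho 0) as [E|E].
  - assert (w = z).
    { apply vec_ext. intros i. destruct (Nat.lt_ge_cases i m) as [Hi|Hi].
      - assert (Rabs (w i - z i) <= rho) by (apply (rsum_term m (fun i => Rabs (w i - z i))); auto; intros; apply Rabs_pos).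
        assert (Rabs (w i - z i) = 0) by (pose proof (Rabs_pos (w i - z i)); lra).
        destruct (Req_dec (w i - z i) 0) as [E0|E0]; [lra|]. exfalso; exact (Rabs_no_R0 _ E0 H0).
      - rewrite !vsupp by auto. reflexivity. }
    subst w. rewrite E. unfold Rdiv. rewrite Rmult_0_l, Rmult_0_l. lra.
  - assert (Hr : rho > 0) by lra.
    set (v := vadd z (vscal (h / rho) (vsub w z))).
    assert (Hv : cube z h v).
    { intros i Hi. unfold v. rewrite vadd_i, vscal_i, vsub_i.
      replace (z i + h / rho * (w i - z i) - z i) with (h / rho * (w i - z i)) by ring.
      rewrite Rabs_mult, (Rabs_right (h / rho)) by (apply Rle_ge, Rlt_le, Rdiv_lt_0_compat; lra).
      assert (Rabs (w i - z i) <= rho) by (apply (rsum_term m (fun i => Rabs (w i - z i))); auto; intros; apply Rabs_pos).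
      apply (Rmult_le_reg_l rho); [lra|]. 
      replace (rho * (h / rho * Rabs (w i - z i))) with (h * Rabs (w i - z i)) by (field; lra).
      assert (0 <= h) by lra. nra. }
    assert (Hw : comb (rho / h) v z = w).
    { apply vec_ext. intros i. rewrite comb_i. unfold v. rewrite vadd_i, vscal_i, vsub_i. field; lra. }
    assert (Hc : 0 <= rho / h <= 1).
    { split.
      - unfold Rdiv. apply Rmult_le_pos; [lra|]. left; apply Rinv_0_lt_compat; lra.
      - apply (Rmult_le_reg_l h); [lra|]. replace (h * (rho / h)) with rho by (field; lra). lra. }
    pose proof (Hconv z Hz v Hv (rho / h) Hc) as Hcv. rewrite Hw in Hcv.
    pose proof (HM z Hz v Hv). 
    assert (rho / h * Qf v <= rho / h * M) by (apply Rmult_le_compat_l; lra).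
    assert (rho / h * (M - Qf z) <= rho / h * (M - mm)) by (apply Rmult_le_compat_l; lra).
    nra.
Qed.
Lemma lag_lemma {m} (S : vec m -> Prop) (Qf : vec m -> R) (y : nat -> vec m)
  (u : nat -> R) (beta : nat -> vec m) (ell : nat -> R) h M mm :
  (1 <= m)%nat -> is_compact S -> (forall k, (1 <= k)%nat -> S (y k)) -> h > 0 ->
  (forall z, S z -> mm <= Qf z) ->
  (forall z, S z -> forall w : vec m, cube z h w -> Qf w <= M) ->
  (forall z, S z -> forall w : vec m, cube z h w -> forall c, 0 <= c <= 1 ->
       Qf (comb c w z) <= c * Qf w + (1 - c) * Qf z) ->
  (forall j, (1 <= j)%nat -> forall w : vec m, cube (y j) h w ->
       u j + vinner (beta j) (vsub w (y j)) <= Qf w) ->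
  (forall k j, (1 <= j)%nat -> (j < k)%nat -> u j + vinner (beta j) (vsub (y k) (y j)) <= ell k) ->
  (forall eps, eps > 0 -> exists N, forall k, (N <= k)%nat -> Qf (y k) - u k < eps) ->
  forall eps, eps > 0 -> exists N, forall k, (N <= k)%nat -> Qf (y k) - ell k < eps.
Proof.
  intros Hm HS Hy Hh Hmm HM Hconv Hcut Hell Hu eps Heps.
  assert (HMm : mm <= M).
  { pose proof (Hy 1%nat (le_n _)). eapply Rle_trans; [apply Hmm; eauto|].
    apply (HM (y 1%nat)); auto. apply cube_refl; lra. }
  set (K' := (M - mm + 1) / h).
  assert (HK'0 : 0 <= K') by (unfold K', Rdiv; apply Rmult_le_pos; [lra| left; apply Rinv_0_lt_compat; lra]).
  assert (Hbeta : forall j, (1 <= j)%nat -> Qf (y j) - u j <= 1 ->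
            rsum m (fun i => Rabs (beta j i)) <= K').
  { intros j Hj Hj1.
    set (w := vadd (y j) (vscal h (sgnv (beta j)))).
    assert (Hw : cube (y j) h w) by (apply cube_sgn; lra).
    pose proof (Hcut j Hj w Hw) as Hc. unfold w in Hc. rewrite vinner_sgn in Hc.
    pose proof (HM (y j) (Hy j Hj) w Hw). pose proof (Hmm (y j) (Hy j Hj)).
    unfold K'. apply (Rmult_le_reg_l h); [lra|].
    replace (h * ((M - mm + 1) / h)) with (M - mm + 1) by (field; lra). 
    unfold w in H. lra. }
  set (C := (M - mm) / h + K' + 1).
  assert (HC : C > 0).
  { unfold C. assert (0 <= (M - mm) / h) by (unfold Rdiv; apply Rmult_le_pos; [lra| left; apply Rinv_0_lt_compat; lra]). lra. }
  assert (Hm1 : 1 <= INR m) by (apply (le_INR 1); lia).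
  set (d := Rmin (h / (2 * INR m)) (eps / (8 * INR m * C))).
  assert (Hd : d > 0).
  { unfold d. apply Rmin_pos; apply Rdiv_lt_0_compat; try lra; nra. }
  assert (Hd1 : 2 * d * INR m <= h).
  { pose proof (Rmin_l (h / (2 * INR m)) (eps / (8 * INR m * C))). fold d in H.
    apply (Rmult_le_compat_l (2 * INR m)) in H; [|lra].
    replace (2 * INR m * (h / (2 * INR m))) with h in H by (field; lra). lra. }
  assert (Hd2 : 2 * d * INR m * C <= eps / 4).
  { pose proof (Rmin_r (h / (2 * INR m)) (eps / (8 * INR m * C))). fold d in H.
    apply (Rmult_le_compat_l (2 * INR m * C)) in H; [|nra].
    replace (2 * INR m * C * (eps / (8 * INR m * C))) with (eps / 4) in H by (field; lra). lra. }
  destruct (Hu (Rmin (eps / 2) 1)) as [N1 HN1]; [apply Rmin_pos; lra|].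
  destruct (compact_repeat S y d (Nat.max N1 1) HS Hy Hd) as [K HK].
  exists K. intros k Hk.
  destruct (HK k Hk) as [j [Hj1 [Hj2 Hjk]]].
  assert (Hj : (1 <= j)%nat) by lia.
  specialize (HN1 j ltac:(lia)).
  pose proof (Rmin_l (eps / 2) 1). pose proof (Rmin_r (eps / 2) 1).
  assert (Hb : rsum m (fun i => Rabs (beta j i)) <= K') by (apply Hbeta; auto; lra).
  pose proof (Hell k j Hj Hj2) as Hl.
  assert (Hin : Rabs (vinner (beta j) (vsub (y k) (y j))) <= rsum m (fun i => Rabs (beta j i)) * (2 * d)).
  { apply vinner_bound. intros i Hi. rewrite vsub_i. left; auto. }
  assert (Hrho : rsum m (fun i => Rabs (y k i - y j i)) <= INR m * (2 * d)).
  { rewrite <- rsum_const. apply rsum_le. intros i Hi. left; auto. }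
  assert (Hlip : Qf (y k) <= Qf (y j) + rsum m (fun i => Rabs (y k i - y j i)) / h * (M - mm)).
  { apply (lipschitz_step S); auto. lra. }
  assert (rsum m (fun i => Rabs (y k i - y j i)) / h * (M - mm) <= 2 * d * INR m * ((M - mm) / h)).
  { unfold Rdiv. assert (0 <= / h) by (left; apply Rinv_0_lt_compat; lra).
    assert (0 <= rsum m (fun i => Rabs (y k i - y j i))) by (apply rsum_nonneg; intros; apply Rabs_pos).
    assert (rsum m (fun i => Rabs (y k i - y j i)) * / h <= INR m * (2 * d) * / h) by (apply Rmult_le_compat_r; lra).
    nra. }
  assert (- (K' * (2 * d)) <= vinner (beta j) (vsub (y k) (y j))).
  { assert (rsum m (fun i => Rabs (beta j i)) * (2 * d) <= K' * (2 * d)) by (apply Rmult_le_compat_r; lra).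
    assert (- vinner (beta j) (vsub (y k) (y j)) <= Rabs (vinner (beta j) (vsub (y k) (y j))))
      by (rewrite <- Rabs_Ropp; apply Rle_abs).
    lra. }
  assert (K' * (2 * d) <= 2 * d * INR m * K').
  { assert (0 <= (INR m - 1) * (2 * d * K')) by (apply Rmult_le_pos; [lra|]; apply Rmult_le_pos; lra).
    nra. }
  assert (2 * d * INR m * ((M - mm) / h) + 2 * d * INR m * K' <= 2 * d * INR m * C) by (unfold C; nra).
  lra.
Qed.
Definition fin (x : Rbar) : R := match x with Finite r => r | _ => 0 end.

Lemma fin_sand x a b : Rbar_le (Finite a) x -> Rbar_le x (Finite b) ->
  x = Finite (fin x) /\ a <= fin x <= b.
Proof. destruct x; simpl; tauto. Qed.

Lemma fin_eq x : x <> p_infty -> x <> m_infty -> x = Finite (fin x).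
Proof. destruct x; simpl; tauto. Qed.

Lemma Rbar_plus_mono_r c a b : Rbar_le a b -> Rbar_le (Rbar_plus c a) (Rbar_plus c b).
Proof. destruct c, a, b; simpl; auto; try tauto; lra. Qed.

Lemma Rbar_plus_mono_l c a b : Rbar_le a b -> Rbar_le (Rbar_plus a c) (Rbar_plus b c).
Proof. destruct c, a, b; simpl; auto; try tauto; lra. Qed.

Lemma Rbar_plus_assoc a b c : Rbar_plus (Rbar_plus a b) c = Rbar_plus a (Rbar_plus b c).
Proof. destruct a, b, c; simpl; auto. f_equal; ring. Qed.

Lemma Rbar_plus_0_l x : Rbar_plus (Finite 0) x = x.
Proof. destruct x; simpl; auto. f_equal; ring. Qed.

Lemma vsub_self_norm {m} (y : vec m) : vnorm (vsub y y) = 0.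
Proof.
  unfold vnorm, vinner. rewrite (rsum_ext _ _ (fun _ => 0)).
  - rewrite rsum_const, Rmult_0_r. apply sqrt_0.
  - intros i _. rewrite vsub_i. ring.
Qed.

Lemma pair_close {m} (a a' b b' : vec m) d : (1 <= m)%nat ->
  vnorm (vsub a a') <= d -> vnorm (vsub b b') <= d ->
  vnorm (vsub (vpair a b) (vpair a' b')) <= INR (m + m) * d.
Proof.
  intros Hm Ha Hb. apply norm_le_coords; [lia|]. intros i Hi.
  rewrite vsub_i, !vpair_i. destruct (Nat.ltb i m).
  - rewrite <- vsub_i. eapply Rle_trans; [apply coord_le_norm|auto].
  - rewrite <- vsub_i. eapply Rle_trans; [apply coord_le_norm|auto].
Qed.
Lemma Rabs_le_inv a c : Rabs a <= c -> - c <= a <= c.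
Proof. intros H. destruct (Rcase_abs a); [rewrite Rabs_left in H | rewrite Rabs_right in H]; lra. Qed.

Definition setc {m} (a : vec m) (k : nat) (v : R) : vec m.
Proof.
  refine (mkvec (fun i => if andb (Nat.eqb i k) (Nat.ltb k m) then v else a i) _).
  intros i Hi. destruct (Nat.eqb_spec i k); destruct (Nat.ltb_spec k m); simpl; try lia; apply vsupp; auto.
Defined.

Lemma setc_i {m} (a : vec m) k v i : (k < m)%nat ->
  setc a k v i = if Nat.eqb i k then v else a i.
Proof.
  intros Hk. simpl. destruct (Nat.eqb i k); destruct (Nat.ltb_spec k m); simpl; auto; lia.
Qed.

Lemma local_cube_bound {m} (F : vec m -> Rbar) (x : vec m) h : h > 0 ->
  (forall w, cube x h w -> F w = Finite (fin (F w))) ->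
  (forall w1 w2 c a1 a2, cube x h w1 -> cube x h w2 -> 0 <= c <= 1 ->
      F w1 = Finite a1 -> F w2 = Finite a2 -> Rbar_le (F (comb c w1 w2)) (Finite (c * a1 + (1 - c) * a2))) ->
  exists M, forall w, cube x h w -> Rbar_le (F w) (Finite M).
Proof.
  intros Hh Hfin Hconv.
  assert (U : forall k, (k <= m)%nat -> forall a, cube x h a -> exists M, forall w, cube x h w ->
                 (forall i, (k <= i)%nat -> w i = a i) -> Rbar_le (F w) (Finite M)).
  { induction k as [|k IHk]; intros Hkm a Ha.
    - exists (fin (F a)). intros w Hw Hwa.
      replace w with a by (apply vec_ext; intros i; symmetry; apply Hwa; lia).
      rewrite (Hfin a Ha). simpl. lra.
    - assert (Hk : (k < m)%nat) by lia.
      assert (Hsc : forall (w : vec m) v, cube x h w -> Rabs (v - x k) <= h -> cube x h (setc w k v)).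
      { intros w v Hw Hv i Hi. rewrite setc_i by auto. destruct (Nat.eqb_spec i k); [subst; auto|apply Hw; auto]. }
      assert (Hp : Rabs (x k + h - x k) <= h) by (replace (x k + h - x k) with h by ring; rewrite Rabs_right; lra).
      assert (Hm : Rabs (x k - h - x k) <= h) by (replace (x k - h - x k) with (- h) by ring; rewrite Rabs_Ropp, Rabs_right; lra).
      destruct (IHk ltac:(lia) (setc a k (x k + h)) (Hsc a _ Ha Hp)) as [Mp HMp].
      destruct (IHk ltac:(lia) (setc a k (x k - h)) (Hsc a _ Ha Hm)) as [Mm HMm].
      exists (Rmax Mp Mm). intros w Hw Hwa.
      set (wp := setc w k (x k + h)). set (wm := setc w k (x k - h)).
      assert (Hwp : cube x h wp) by (apply Hsc; auto).
      assert (Hwm : cube x h wm) by (apply Hsc; auto).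
      assert (Bp : Rbar_le (F wp) (Finite Mp)).
      { apply HMp; auto. intros i Hi. unfold wp. rewrite !setc_i by auto.
        destruct (Nat.eqb_spec i k); auto. apply Hwa; lia. }
      assert (Bm : Rbar_le (F wm) (Finite Mm)).
      { apply HMm; auto. intros i Hi. unfold wm. rewrite !setc_i by auto.
        destruct (Nat.eqb_spec i k); auto. apply Hwa; lia. }
      set (c := (w k - (x k - h)) / (2 * h)).
      assert (Hwk : Rabs (w k - x k) <= h) by (apply Hw; auto).
      assert (Hc : 0 <= c <= 1).
      { unfold c. apply Rabs_le_inv in Hwk. split.
        - unfold Rdiv. apply Rmult_le_pos; [lra|]. left; apply Rinv_0_lt_compat; lra.
        - apply (Rmult_le_reg_l (2 * h)); [lra|]. replace (2 * h * ((w k - (x k - h)) / (2 * h))) with (w k - (x k - h)) by (field; lra). lra. }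
      assert (Hw' : comb c wp wm = w).
      { apply vec_ext. intros i. rewrite comb_i. unfold wp, wm. rewrite !setc_i by auto.
        destruct (Nat.eqb_spec i k).
        - subst i. unfold c. field. lra.
        - ring. }
      rewrite (Hfin wp Hwp) in Bp. rewrite (Hfin wm Hwm) in Bm.
      pose proof (Hconv wp wm c _ _ Hwp Hwm Hc (Hfin wp Hwp) (Hfin wm Hwm)) as HH.
      rewrite Hw' in HH. eapply Rbar_le_trans; [exact HH|]. simpl in *.
      pose proof (Rmax_l Mp Mm). pose proof (Rmax_r Mp Mm). nra. }
  destruct (U m (le_n m) x (cube_refl x h ltac:(lra))) as [M HM]. exists M.
  intros w Hw. apply HM; auto. intros i Hi. rewrite !vsupp by auto. reflexivity.
Qed.
Section Main.
Variables (n p q T : nat).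
Hypothesis Hn : (1 <= n)%nat.
Hypothesis Hp : (1 <= p)%nat.
Hypothesis Hq : (1 <= q)%nat.
Hypothesis HT : (1 <= T)%nat.
Variable x0 : vec n.
Variable X : nat -> vec n -> Prop.
Variable f : nat -> vec n -> vec n -> Rbar.
Variable g : nat -> nat -> vec n -> vec n -> R.
Variables A B : nat -> nat -> nat -> R.
Variable b : nat -> vec q.
Hypothesis HX0 : forall y, X 0%nat y <-> y = x0.
Hypothesis HH0 : H0 n p q X f g A B b T.
Variable Q : nat -> vec n -> Rbar.
Hypothesis HQT1 : forall y, Q (T + 1)%nat y = Finite 0.
Hypothesis HQ : forall t y, (1 <= t <= T)%nat ->
     Rbar_is_inf (fun v => exists x, Xset n p q X g A B b t y x /\
                                     v = Rbar_plus (f t y x) (Q (t + 1)%nat x))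
                 (Q t y).
Variable lam : nat -> nat -> R.
Variable xP : nat -> nat -> vec n.
Hypothesis Hlam_nn : forall t k, 0 <= lam t k.
Hypothesis Hlam1 : forall t, lam t 1%nat = 0.
Hypothesis HlamT : forall k, (1 <= k)%nat -> lam T k = 0.
Hypothesis Hlam_lim : forall t, (1 <= t <= T - 1)%nat -> Un_cv (fun k => lam t k) 0.
Hypothesis HxP : forall t k, (1 <= t <= T)%nat -> (1 <= k)%nat -> X t (xP t k).
Variable x : nat -> nat -> vec n.
Variable Qk : nat -> nat -> vec n -> Rbar.
Variable uQ : nat -> nat -> vec n -> Rbar.
Variable beta : nat -> nat -> vec n.
Hypothesis HQk_T1 : forall k y, Qk (T + 1)%nat k y = Finite 0.
Hypothesis HQk0 : forall t y, (2 <= t <= T)%nat -> X (t - 1)%nat y ->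
     Rbar_le (Qk t 0%nat y) (Q t y) /\ Qk t 0%nat y <> p_infty.
Hypothesis Hfwd0 : forall k, (1 <= k)%nat -> x 0%nat k = x0.
Hypothesis Hfwd : forall t k, (1 <= t <= T)%nat -> (1 <= k)%nat ->
     Xset n p q X g A B b t (x (t - 1)%nat k) (x t k) /\
     forall z, Xset n p q X g A B b t (x (t - 1)%nat k) z ->
       Rbar_le (Fbar n f Qk lam t k (x (t - 1)%nat k) (x t k) (xP t k))
               (Fbar n f Qk lam t k (x (t - 1)%nat k) z (xP t k)).
Hypothesis HuQ : forall t k y, (1 <= t <= T)%nat -> (1 <= k)%nat ->
     Rbar_is_inf (fun v => exists z, Xset n p q X g A B b t y z /\
                                     v = Rbar_plus (f t y z) (Qk (t + 1)%nat k z))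
                 (uQ t k y).
Hypothesis Hbwd : forall t k, (2 <= t <= T)%nat -> (1 <= k)%nat ->
     subgrad (uQ t k) (x (t - 1)%nat k) (beta t k) /\
     forall y, X (t - 1)%nat y ->
       Qk t k y = Rbar_max (Qk t (k - 1)%nat y)
                    (Rbar_plus (uQ t k (x (t - 1)%nat k))
                       (Finite (vinner (beta t k) (vsub y (x (t - 1)%nat k))))).

Local Notation XS := (Xset n p q X g A B b).

Lemma X_cpt t : (1 <= t <= T)%nat -> is_compact (X t).
Proof. intros Ht. apply (HH0 t Ht). Qed.

Lemma X_cvx t : (1 <= t <= T)%nat -> is_convex_set (X t).
Proof. intros Ht. apply (HH0 t Ht). Qed.

Lemma f_notm t y z : (1 <= t <= T)%nat -> f t y z <> m_infty.
Proof.
  intros Ht. destruct (HH0 t Ht) as [_ [[[Hpr _] _] _]].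
  rewrite <- (uncurry2_pair (f t) y z). apply Hpr.
Qed.

Lemma H0d t : (1 <= t <= T)%nat -> exists eps, eps > 0 /\
  (forall y z, inflate (X (t - 1)) eps y -> X t z -> f t y z <> p_infty) /\
  (forall y, inflate (X (t - 1)) eps y -> exists z, XS t y z).
Proof.
  intros Ht. destruct (HH0 t Ht) as [_ [_ [_ [[eps [He [H1 H2]]] _]]]].
  exists eps. repeat split; auto.
  intros y Hy. destruct (H2 y Hy) as [z [Hz [Hg Hl]]]. exists z. repeat split; auto.
Qed.

Lemma inflate_self (S : vec n -> Prop) eps y : eps >= 0 -> S y -> inflate S eps y.
Proof. intros He Hy. exists y. split; auto. rewrite vsub_self_norm. lra. Qed.

Lemma f_fin t y z : (1 <= t <= T)%nat -> X (t - 1) y -> X t z -> f t y z = Finite (fin (f t y z)).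
Proof.
  intros Ht Hy Hz. destruct (H0d t Ht) as [eps [He [H1 _]]].
  apply fin_eq; [apply H1; auto; apply inflate_self; auto; lra | apply f_notm; auto].
Qed.

Lemma feas t y : (1 <= t <= T)%nat -> X (t - 1) y -> exists z, XS t y z.
Proof.
  intros Ht Hy. destruct (H0d t Ht) as [eps [He [_ H2]]]. apply H2. apply inflate_self; auto; lra.
Qed.

Lemma X_bounded t : (1 <= t <= T)%nat -> exists R, 0 <= R /\ forall y, X t y -> forall i, Rabs (y i) <= R.
Proof. intros Ht. apply compact_bounded, X_cpt; auto. Qed.

Lemma X_diam t : (1 <= t <= T)%nat -> exists D, 0 <= D /\
  forall y z, X t y -> X t z -> vnorm (vsub y z) ^ 2 <= D.
Proof.
  intros Ht. destruct (X_bounded t Ht) as [R [HR HRy]].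
  exists (INR n * ((2 * R) * (2 * R))). split; [apply Rmult_le_pos; [apply pos_INR | nra]|].
  intros y z Hy Hz. rewrite vnorm_sq. unfold vinner. rewrite <- rsum_const. apply rsum_le.
  intros i Hi. rewrite vsub_i. pose proof (HRy y Hy i). pose proof (HRy z Hz i).
  assert (Rabs (y i - z i) <= 2 * R).
  { unfold Rminus. eapply Rle_trans; [apply Rabs_triang|]. rewrite Rabs_Ropp. lra. }
  assert (Hsq : (y i - z i) * (y i - z i) = Rabs (y i - z i) * Rabs (y i - z i)).
  { rewrite <- Rabs_mult. pose proof (Rle_0_sqr (y i - z i)); unfold Rsqr in *. rewrite Rabs_right; [ring|lra]. }
  rewrite Hsq. pose proof (Rabs_pos (y i - z i)). nra.
Qed.

Lemma Xset_X t y z : XS t y z -> X t z.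
Proof. intros [H _]; auto. Qed.

Lemma fwd_X t k : (1 <= t <= T)%nat -> (1 <= k)%nat -> X t (x t k).
Proof. intros Ht Hk. apply (Xset_X t (x (t-1)%nat k)). apply (Hfwd t k Ht Hk). Qed.

Lemma fwd_X' t k : (1 <= t <= T + 1)%nat -> (1 <= k)%nat -> X (t - 1) (x (t - 1)%nat k).
Proof.
  intros Ht Hk. destruct (Nat.eq_dec t 1).
  - subst. simpl. rewrite Hfwd0 by auto. apply HX0. reflexivity.
  - apply fwd_X; auto; lia.
Qed.
Lemma uQ_le_Q t k : (1 <= t <= T)%nat -> (1 <= k)%nat ->
  (forall z, X t z -> Rbar_le (Qk (t + 1)%nat k z) (Q (t + 1)%nat z)) ->
  forall y, Rbar_le (uQ t k y) (Q t y).
Proof.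
  intros Ht Hk Hz y. apply (inf_glb _ _ _ (HQ t y Ht)). intros w [z [Hxz ->]].
  eapply Rbar_le_trans.
  - apply (inf_lb _ _ _ (HuQ t k y Ht Hk)). exists z. split; eauto.
  - apply Rbar_plus_mono_r. apply Hz. apply (Xset_X t y z Hxz).
Qed.

Definition r_cut t k := fin (uQ t k (x (t - 1)%nat k)).
Definition cutv t k y := r_cut t k + vinner (beta t k) (vsub y (x (t - 1)%nat k)).

Lemma cut_sub t k : (2 <= t <= T)%nat -> (1 <= k)%nat ->
  uQ t k (x (t - 1)%nat k) = Finite (r_cut t k) /\
  forall y, Rbar_le (Finite (cutv t k y)) (uQ t k y).
Proof.
  intros Ht Hk. destruct (Hbwd t k Ht Hk) as [[r [Hr Hy]] _].
  unfold cutv, r_cut. rewrite Hr. simpl. split; auto.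
Qed.

Lemma Qk_eq t k y : (2 <= t <= T)%nat -> (1 <= k)%nat -> X (t - 1)%nat y ->
  Qk t k y = Rbar_max (Qk t (k - 1)%nat y) (Finite (cutv t k y)).
Proof.
  intros Ht Hk Hy. destruct (Hbwd t k Ht Hk) as [_ He]. rewrite He by auto.
  destruct (cut_sub t k Ht Hk) as [Hr _]. rewrite Hr. reflexivity.
Qed.

Lemma valid : forall k t, (2 <= t <= T + 1)%nat -> forall y, X (t - 1)%nat y ->
  Rbar_le (Qk t k y) (Q t y).
Proof.
  induction k as [|k IHk].
  - intros t Ht y Hy. destruct (Nat.eq_dec t (T + 1)).
    + subst. rewrite HQk_T1, HQT1. apply Rbar_le_refl.
    + apply HQk0; auto; lia.
  - assert (H : forall j t, (t + j = T + 1)%nat -> (2 <= t)%nat -> forall y, X (t - 1)%nat y ->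
              Rbar_le (Qk t (S k) y) (Q t y)).
    { induction j as [|j IHj]; intros t Htj Ht y Hy.
      - replace t with (T + 1)%nat by lia. rewrite HQk_T1, HQT1. apply Rbar_le_refl.
      - rewrite Qk_eq by (auto; lia). apply Rbar_max_lub.
        + replace (S k - 1)%nat with k by lia. apply IHk; auto; lia.
        + eapply Rbar_le_trans; [apply (cut_sub t (S k)); lia|].
          apply uQ_le_Q; try lia. intros z Hz. apply IHj; try lia.
          replace (t + 1 - 1)%nat with t by lia. auto. }
    intros t Ht y Hy. apply (H (T + 1 - t)%nat); auto; lia.
Qed.

Lemma cut_le_Q t k : (2 <= t <= T)%nat -> (1 <= k)%nat -> forall y, Rbar_le (Finite (cutv t k y)) (Q t y).
Proof.
  intros Ht Hk y. eapply Rbar_le_trans; [apply (cut_sub t k Ht Hk)|].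
  apply uQ_le_Q; try lia. intros z Hz. apply valid; [lia|]. replace (t + 1 - 1)%nat with t by lia. auto.
Qed.

Lemma uQ_le_Q' t k : (1 <= t <= T)%nat -> (1 <= k)%nat -> forall y, Rbar_le (uQ t k y) (Q t y).
Proof.
  intros Ht Hk. apply uQ_le_Q; auto. intros z Hz. apply valid; [lia|].
  replace (t + 1 - 1)%nat with t by lia. auto.
Qed.

Lemma Qk_mono t k y : (2 <= t <= T + 1)%nat -> (1 <= k)%nat -> X (t - 1)%nat y ->
  Rbar_le (Qk t (k - 1)%nat y) (Qk t k y).
Proof.
  intros Ht Hk Hy. destruct (Nat.eq_dec t (T + 1)).
  - subst. rewrite !HQk_T1. apply Rbar_le_refl.
  - rewrite (Qk_eq t k) by (auto; lia). apply Rbar_max_l.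
Qed.

Lemma cut_le_Qk t j k y : (2 <= t <= T)%nat -> (1 <= j)%nat -> (j <= k)%nat -> X (t - 1)%nat y ->
  Rbar_le (Finite (cutv t j y)) (Qk t k y).
Proof.
  intros Ht Hj Hjk Hy. induction Hjk.
  - rewrite Qk_eq by auto. apply Rbar_max_r.
  - eapply Rbar_le_trans; [apply IHHjk|]. replace m with (S m - 1)%nat at 1 by lia.
    apply Qk_mono; auto; lia.
Qed.

Lemma Rbar_plus_notp a c : a <> p_infty -> c <> p_infty -> Rbar_plus a c <> p_infty.
Proof. destruct a, c; simpl; congruence. Qed.

Lemma le_notp a c : Rbar_le a c -> c <> p_infty -> a <> p_infty.
Proof. destruct a, c; simpl; try congruence; tauto. Qed.

Lemma ge_notm a c : Rbar_le c a -> c <> m_infty -> a <> m_infty.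
Proof. destruct a, c; simpl; try congruence; tauto. Qed.

Lemma Q_notp_X : forall t, (1 <= t <= T + 1)%nat -> forall y, X (t - 1)%nat y -> Q t y <> p_infty.
Proof.
  assert (H : forall j t, (t + j = T + 1)%nat -> (1 <= t)%nat -> forall y, X (t - 1)%nat y -> Q t y <> p_infty).
  { induction j as [|j IHj]; intros t Htj Ht y Hy.
    - replace t with (T + 1)%nat by lia. rewrite HQT1. congruence.
    - destruct (feas t y ltac:(lia) Hy) as [z Hz].
      eapply le_notp.
      + apply (inf_lb _ _ _ (HQ t y ltac:(lia))). exists z; split; eauto.
      + apply Rbar_plus_notp.
        * rewrite f_fin; auto; try lia; [congruence|]. apply (Xset_X _ _ _ Hz).
        * apply IHj; try lia. replace (t + 1 - 1)%nat with t by lia. apply (Xset_X _ _ _ Hz). }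
  intros t Ht y Hy. apply (H (T + 1 - t)%nat); auto; lia.
Qed.

Lemma Q_notp_infl t : (1 <= t <= T)%nat -> exists eps, eps > 0 /\
  forall y, inflate (X (t - 1)%nat) eps y -> Q t y <> p_infty.
Proof.
  intros Ht. destruct (H0d t Ht) as [eps [He [H1 H2]]]. exists eps. split; auto.
  intros y Hy. destruct (H2 y Hy) as [z Hz].
  eapply le_notp.
  - apply (inf_lb _ _ _ (HQ t y Ht)). exists z; split; eauto.
  - apply Rbar_plus_notp.
    + apply H1; auto. apply (Xset_X _ _ _ Hz).
    + apply Q_notp_X; try lia. replace (t + 1 - 1)%nat with t by lia. apply (Xset_X _ _ _ Hz).
Qed.

Lemma Q_notm t y : (2 <= t <= T)%nat -> Q t y <> m_infty.
Proof. intros Ht. eapply ge_notm; [apply (cut_le_Q t 1%nat); auto|]. congruence. Qed.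

Lemma Q_fin t y : (2 <= t <= T + 1)%nat -> X (t - 1)%nat y -> Q t y = Finite (fin (Q t y)).
Proof.
  intros Ht Hy. destruct (Nat.eq_dec t (T + 1)).
  - subst. rewrite HQT1. reflexivity.
  - apply fin_eq; [apply Q_notp_X; auto; lia | apply Q_notm; lia].
Qed.

Lemma Qk_fin t k y : (2 <= t <= T + 1)%nat -> (1 <= k)%nat -> X (t - 1)%nat y ->
  Qk t k y = Finite (fin (Qk t k y)).
Proof.
  intros Ht Hk Hy. destruct (Nat.eq_dec t (T + 1)).
  - subst. rewrite HQk_T1. reflexivity.
  - apply fin_eq.
    + eapply le_notp; [apply valid; auto|]. apply Q_notp_X; auto; lia.
    + eapply ge_notm; [apply (cut_le_Qk t 1%nat k); auto; lia|]. congruence.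
Qed.
Lemma conv_apply {m} (h : vec m -> Rbar) u v c : is_convex_fun h -> 0 < c < 1 ->
  Rbar_le (h (comb c u v)) (Rbar_plus (Rbar_pscal c (h u)) (Rbar_pscal (1 - c) (h v))).
Proof. intros H Hc. exact (H u v c Hc). Qed.

Lemma lin_comb t c y1 z1 y2 z2 : lin_ok n q A B b t y1 z1 -> lin_ok n q A B b t y2 z2 ->
  lin_ok n q A B b t (comb c y1 y2) (comb c z1 z2).
Proof.
  intros H1 H2 i Hi. specialize (H1 i Hi). specialize (H2 i Hi).
  rewrite (rsum_ext _ _ (fun j => c * (A t i j * z1 j) + (1 - c) * (A t i j * z2 j))).
  2:{ intros j _. rewrite comb_i. ring. }
  rewrite (rsum_ext _ (fun j => B t i j * comb c y1 y2 j) (fun j => c * (B t i j * y1 j) + (1 - c) * (B t i j * y2 j))).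
  2:{ intros j _. rewrite comb_i. ring. }
  rewrite !rsum_lin.
  match goal with |- ?L = ?bb =>
    transitivity (c * (rsum n (fun j => A t i j * z1 j) + rsum n (fun j => B t i j * y1 j)) +
                  (1 - c) * (rsum n (fun j => A t i j * z2 j) + rsum n (fun j => B t i j * y2 j)));
    [ring | rewrite H1, H2; ring] end.
Qed.

Lemma Q_conv : forall t, (1 <= t <= T + 1)%nat -> forall y1 y2 a1 a2 c, 0 <= c <= 1 ->
  Q t y1 = Finite a1 -> Q t y2 = Finite a2 ->
  Rbar_le (Q t (comb c y1 y2)) (Finite (c * a1 + (1 - c) * a2)).
Proof.
  assert (H : forall j t, (t + j = T + 1)%nat -> (1 <= t)%nat -> forall y1 y2 a1 a2 c, 0 <= c <= 1 ->
    Q t y1 = Finite a1 -> Q t y2 = Finite a2 ->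
    Rbar_le (Q t (comb c y1 y2)) (Finite (c * a1 + (1 - c) * a2))).
  { induction j as [|j IHj]; intros t Htj Ht y1 y2 a1 a2 c Hc E1 E2.
    - replace t with (T + 1)%nat in * by lia. rewrite HQT1 in *.
      injection E1; injection E2; intros; subst. simpl. lra.
    - destruct (Req_dec c 0) as [->|Hc0].
      { rewrite comb_0, E2. simpl. lra. }
      destruct (Req_dec c 1) as [->|Hc1].
      { rewrite comb_1, E1. simpl. lra. }
      assert (Hc' : 0 < c < 1) by lra.
      assert (Htt : (1 <= t <= T)%nat) by lia.
      apply Rbar_le_eps. intros eta Heta.
      destruct (inf_approx _ _ eta (eq_ind _ _ (HQ t y1 Htt) _ E1) Heta) as [w1 [[z1 [Hz1 ->]] Hw1]].
      destruct (inf_approx _ _ eta (eq_ind _ _ (HQ t y2 Htt) _ E2) Heta) as [w2 [[z2 [Hz2 ->]] Hw2]].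
      assert (HX1 : X t z1) by apply (Xset_X _ _ _ Hz1).
      assert (HX2 : X t z2) by apply (Xset_X _ _ _ Hz2).
      assert (Hq1 := Q_fin (t + 1) z1 ltac:(lia) ltac:(replace (t + 1 - 1)%nat with t by lia; auto)).
      assert (Hq2 := Q_fin (t + 1) z2 ltac:(lia) ltac:(replace (t + 1 - 1)%nat with t by lia; auto)).
      set (q1 := fin (Q (t + 1)%nat z1)) in *. set (q2 := fin (Q (t + 1)%nat z2)) in *.
      rewrite Hq1 in Hw1. rewrite Hq2 in Hw2.
      assert (Hf1 : f t y1 z1 = Finite (fin (f t y1 z1))).
      { apply fin_eq; [|apply f_notm; auto]. intros E. rewrite E in Hw1. simpl in Hw1. tauto. }
      assert (Hf2 : f t y2 z2 = Finite (fin (f t y2 z2))).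
      { apply fin_eq; [|apply f_notm; auto]. intros E. rewrite E in Hw2. simpl in Hw2. tauto. }
      set (b1 := fin (f t y1 z1)) in *. set (b2 := fin (f t y2 z2)) in *.
      rewrite Hf1 in Hw1. rewrite Hf2 in Hw2. simpl in Hw1, Hw2.
      destruct (HH0 t Htt) as [[_ [HXc _]] [[_ [Hfc _]] [Hgc _]]].
      set (z := comb c z1 z2).
      assert (Hz : XS t (comb c y1 y2) z).
      { destruct Hz1 as [_ [L1 G1]]. destruct Hz2 as [_ [L2 G2]].
        split; [|split].
        - apply HXc; auto; lra.
        - apply lin_comb; auto.
        - intros i Hi. destruct (Hgc i Hi) as [Hgi _].
          pose proof (conv_apply _ (vpair y1 z1) (vpair y2 z2) c Hgi Hc') as HH.
          rewrite comb_pair, !uncurry2_pair in HH. simpl in HH.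
          specialize (G1 i Hi). specialize (G2 i Hi). unfold z. nra. }
      eapply Rbar_le_trans; [apply (inf_lb _ _ _ (HQ t _ Htt)); exists z; split; eauto|].
      pose proof (conv_apply _ (vpair y1 z1) (vpair y2 z2) c Hfc Hc') as HF.
      rewrite comb_pair, !uncurry2_pair, Hf1, Hf2 in HF. simpl in HF.
      assert (HQz : Rbar_le (Q (t + 1)%nat z) (Finite (c * q1 + (1 - c) * q2))).
      { apply IHj; auto; lia. }
      eapply Rbar_le_trans; [apply (Rbar_plus_le_fin _ _ _ _ HF HQz)|].
      simpl. nra. }
  intros t Ht. apply (H (T + 1 - t)%nat); auto; lia.
Qed.
Lemma Q_cube t : (2 <= t <= T)%nat -> exists h M, h > 0 /\
  forall y, X (t - 1)%nat y -> forall w, cube y h w ->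
    Q t w = Finite (fin (Q t w)) /\ fin (Q t w) <= M.
Proof.
  intros Ht. destruct (Q_notp_infl t ltac:(lia)) as [eps [He Hinf]].
  assert (Hn1 : 1 <= INR n) by (apply (le_INR 1); lia).
  set (h0 := eps / INR n).
  assert (Hh0 : h0 > 0) by (unfold h0; apply Rdiv_lt_0_compat; lra).
  assert (Hin : forall y, X (t - 1)%nat y -> forall w, cube y h0 w -> Q t w = Finite (fin (Q t w))).
  { intros y Hy w Hw. apply fin_eq; [|apply Q_notm; lia]. apply Hinf.
    exists y. split; auto. eapply Rle_trans; [apply norm_le_coords; auto|].
    - intros i Hi. rewrite vsub_i. apply Hw; auto.
    - unfold h0. right. field. lra. }
  destruct (compact_unif_bound (X (t - 1)%nat) (Q t) h0) as [M HM]; auto.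
  - apply X_cpt; lia.
  - intros y Hy. apply local_cube_bound; auto.
    + intros w Hw. eapply Hin; eauto.
    + intros w1 w2 c a1 a2 _ _ Hc E1 E2. apply Q_conv; auto; lia.
  - exists (h0 / 2), M. split; [lra|]. intros y Hy w Hw.
    assert (Hw' : cube y h0 w) by (intros i Hi; specialize (Hw i Hi); lra).
    pose proof (Hin y Hy w Hw') as E. split; auto.
    pose proof (HM y Hy w Hw) as HB. rewrite E in HB. exact HB.
Qed.

Lemma Q_lowb t : (2 <= t <= T)%nat -> exists mm, forall y, X (t - 1)%nat y -> mm <= fin (Q t y).
Proof.
  intros Ht. destruct (X_bounded (t - 1)%nat ltac:(lia)) as [R [HR HRy]].
  set (x1 := x (t - 1)%nat 1%nat).
  assert (Hx1 : X (t - 1)%nat x1) by (apply fwd_X'; lia).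
  exists (r_cut t 1%nat - rsum n (fun i => Rabs (beta t 1%nat i)) * (2 * R)).
  intros y Hy. pose proof (cut_le_Q t 1%nat Ht (le_n _) y) as H.
  rewrite (Q_fin t y) in H by (auto; lia). simpl in H. unfold cutv in H.
  assert (Rabs (vinner (beta t 1%nat) (vsub y x1)) <= rsum n (fun i => Rabs (beta t 1%nat i)) * (2 * R)).
  { apply vinner_bound. intros i Hi. rewrite vsub_i. unfold Rminus.
    eapply Rle_trans; [apply Rabs_triang|]. rewrite Rabs_Ropp. pose proof (HRy y Hy i). pose proof (HRy x1 Hx1 i). lra. }
  apply Rabs_le_inv in H0. fold x1 in H. lra.
Qed.
Lemma Fbar_fin t k y z P a c : f t y z = Finite a -> Qk (t + 1)%nat (k - 1)%nat z = Finite c ->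
  Fbar n f Qk lam t k y z P = Finite (a + c + lam t k * vnorm (vsub z P) ^ 2).
Proof. intros E1 E2. unfold Fbar. rewrite E1, E2. reflexivity. Qed.

Lemma sq_nonneg' r : 0 <= r ^ 2.
Proof. pose proof (Rle_0_sqr r). unfold Rsqr in H. simpl. lra. Qed.

Lemma step s : (1 <= s <= T)%nat -> exists D, 0 <= D /\ forall k, (2 <= k)%nat ->
  let y := x (s - 1)%nat k in let zs := x s k in
  Q s y = Finite (fin (Q s y)) /\
  uQ s k y = Finite (fin (uQ s k y)) /\
  f s y zs = Finite (fin (f s y zs)) /\
  Q (s + 1)%nat zs = Finite (fin (Q (s + 1)%nat zs)) /\
  Qk (s + 1)%nat (k - 1)%nat zs = Finite (fin (Qk (s + 1)%nat (k - 1)%nat zs)) /\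
  fin (Q s y) <= fin (f s y zs) + fin (Q (s + 1)%nat zs) /\
  fin (f s y zs) + fin (Qk (s + 1)%nat (k - 1)%nat zs) - lam s k * D <= fin (uQ s k y) /\
  fin (uQ s k y) <= fin (Q s y) /\
  fin (f s y zs) + fin (Qk (s + 1)%nat (k - 1)%nat zs) + lam s k * vnorm (vsub zs (xP s k)) ^ 2
     <= fin (Q s y) + lam s k * D /\
  fin (Qk (s + 1)%nat (k - 1)%nat zs) <= fin (Q (s + 1)%nat zs).
Proof.
  intros Hs. destruct (X_diam s Hs) as [D [HD HDd]]. exists D. split; auto.
  intros k Hk y zs.
  assert (Hy : X (s - 1)%nat y) by (apply fwd_X'; lia).
  assert (Hzs : X s zs) by (apply fwd_X; lia).
  assert (Hs1 : (2 <= s + 1 <= T + 1)%nat) by lia.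
  assert (Hzs' : X (s + 1 - 1)%nat zs) by (replace (s + 1 - 1)%nat with s by lia; auto).
  assert (Ef := f_fin s y zs Hs Hy Hzs). set (fs := fin (f s y zs)) in *.
  assert (EQ1 := Q_fin (s + 1) zs Hs1 Hzs'). set (Qs1 := fin (Q (s + 1)%nat zs)) in *.
  assert (EQk := Qk_fin (s + 1) (k - 1) zs Hs1 ltac:(lia) Hzs'). set (qk := fin (Qk (s + 1)%nat (k - 1)%nat zs)) in *.
  assert (Hqk : qk <= Qs1).
  { pose proof (valid (k - 1) (s + 1) Hs1 zs Hzs') as HV. rewrite EQk, EQ1 in HV. exact HV. }
  destruct (Hfwd s k Hs ltac:(lia)) as [Hfeas Hmin]. fold y zs in Hfeas, Hmin.
  set (nrm := vnorm (vsub zs (xP s k)) ^ 2).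
  assert (Hnrm : 0 <= nrm) by apply sq_nonneg'.
  assert (HP : X s (xP s k)) by (apply HxP; lia).
  assert (EF : Fbar n f Qk lam s k y zs (xP s k) = Finite (fs + qk + lam s k * nrm)) by (apply Fbar_fin; auto).
  assert (Key : forall z, XS s y z -> exists fz qz, f s y z = Finite fz /\
      Qk (s + 1)%nat (k - 1)%nat z = Finite qz /\ fs + qk + lam s k * nrm <= fz + qz + lam s k * D).
  { intros z Hz. assert (HXz : X s z) by apply (Xset_X _ _ _ Hz).
    assert (HXz' : X (s + 1 - 1)%nat z) by (replace (s + 1 - 1)%nat with s by lia; auto).
    exists (fin (f s y z)), (fin (Qk (s + 1)%nat (k - 1)%nat z)).
    pose proof (f_fin s y z Hs Hy HXz) as E1. pose proof (Qk_fin (s + 1) (k - 1) z Hs1 ltac:(lia) HXz') as E2.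
    split; auto. split; auto.
    pose proof (Hmin z Hz) as HM. rewrite EF, (Fbar_fin _ _ _ _ _ _ _ E1 E2) in HM. simpl in HM.
    pose proof (HDd z (xP s k) HXz HP). pose proof (Hlam_nn s k).
    assert (lam s k * vnorm (vsub z (xP s k)) ^ 2 <= lam s k * D) by (apply Rmult_le_compat_l; auto).
    lra. }
  assert (HQl : Rbar_le (Finite (fs + qk + lam s k * nrm - lam s k * D)) (Q s y)).
  { apply (inf_glb _ _ _ (HQ s y Hs)). intros w [z [Hz ->]].
    destruct (Key z Hz) as [fz [qz [E1 [E2 Hle]]]]. rewrite E1.
    assert (HXz' : X (s + 1 - 1)%nat z) by (replace (s + 1 - 1)%nat with s by lia; apply (Xset_X _ _ _ Hz)).
    pose proof (valid (k - 1) (s + 1) Hs1 z HXz') as HV. rewrite E2 in HV.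
    pose proof (Hlam_nn s k).
    destruct (Q (s + 1)%nat z); simpl in *; auto; try tauto. nra. }
  assert (HuQl : Rbar_le (Finite (fs + qk - lam s k * D)) (uQ s k y)).
  { apply (inf_glb _ _ _ (HuQ s k y Hs ltac:(lia))). intros w [z [Hz ->]].
    destruct (Key z Hz) as [fz [qz [E1 [E2 Hle]]]]. rewrite E1.
    assert (HXz' : X (s + 1 - 1)%nat z) by (replace (s + 1 - 1)%nat with s by lia; apply (Xset_X _ _ _ Hz)).
    pose proof (Qk_mono (s + 1) k z Hs1 ltac:(lia) HXz') as HV. rewrite E2 in HV.
    pose proof (Hlam_nn s k).
    destruct (Qk (s + 1)%nat k z); simpl in *; auto; try tauto. nra. }
  assert (HQu : Rbar_le (Q s y) (Finite (fs + Qs1))).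
  { rewrite <- Rbar_plus_fin, <- Ef, <- EQ1. apply (inf_lb _ _ _ (HQ s y Hs)). exists zs; split; auto. }
  assert (HuQu : Rbar_le (uQ s k y) (Q s y)) by (apply uQ_le_Q'; auto; lia).
  destruct (fin_sand _ _ _ HQl HQu) as [EQs [HQs1 HQs2]].
  assert (HuQu' : Rbar_le (uQ s k y) (Finite (fin (Q s y)))) by (rewrite <- EQs; auto).
  destruct (fin_sand _ _ _ HuQl HuQu') as [EuQ [HuQ1 HuQ2]].
  assert (0 <= lam s k * nrm) by (apply Rmult_le_pos; auto).
  repeat split; auto; try lra.
Qed.
Definition cv0 (u : nat -> R) := forall eps, eps > 0 -> exists N, forall k, (N <= k)%nat -> u k < eps.

Lemma lam_cv s : (1 <= s <= T)%nat -> cv0 (fun k => lam s k).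
Proof.
  intros Hs eps He. destruct (Nat.eq_dec s T).
  - subst. exists 1%nat. intros k Hk. rewrite HlamT by auto. lra.
  - destruct (Hlam_lim s ltac:(lia) eps He) as [N HN]. exists N. intros k Hk.
    specialize (HN k Hk). unfold R_dist in HN. rewrite Rminus_0_r in HN.
    eapply Rle_lt_trans; [apply Rle_abs|exact HN].
Qed.

Lemma cv0_comb u w s D : (1 <= s <= T)%nat -> 0 <= D -> cv0 u ->
  (forall k, (2 <= k)%nat -> w k <= u k + lam s k * D) -> cv0 w.
Proof.
  intros Hs HD Hu Hw eps He.
  destruct (Hu (eps / 2)) as [N1 HN1]; [lra|].
  destruct (lam_cv s Hs (eps / (2 * (D + 1)))) as [N2 HN2].
  { apply Rdiv_lt_0_compat; lra. }
  exists (Nat.max (Nat.max N1 N2) 2). intros k Hk.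
  specialize (HN1 k ltac:(lia)). specialize (HN2 k ltac:(lia)). specialize (Hw k ltac:(lia)).
  pose proof (Hlam_nn s k).
  assert (lam s k * D <= eps / 2).
  { assert (lam s k * D <= lam s k * (D + 1)) by (apply Rmult_le_compat_l; lra).
    assert (lam s k * (D + 1) <= eps / (2 * (D + 1)) * (D + 1)) by (apply Rmult_le_compat_r; lra).
    replace (eps / (2 * (D + 1)) * (D + 1)) with (eps / 2) in H1 by (field; lra). lra. }
  lra.
Qed.

Lemma cv0_plus u v : cv0 u -> cv0 v -> cv0 (fun k => u k + v k).
Proof.
  intros Hu Hv eps He. destruct (Hu (eps / 2)) as [N1 H1]; [lra|]. destruct (Hv (eps / 2)) as [N2 H2]; [lra|].
  exists (Nat.max N1 N2). intros k Hk. specialize (H1 k ltac:(lia)). specialize (H2 k ltac:(lia)). lra.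
Qed.

Definition gapv s k := fin (Q s (x (s - 1)%nat k)) - fin (Qk s (k - 1)%nat (x (s - 1)%nat k)).
Definition av s k := fin (Q s (x (s - 1)%nat k)) - fin (uQ s k (x (s - 1)%nat k)).

Lemma gapv_shift s k : gapv (s + 1) k =
  fin (Q (s + 1)%nat (x s k)) - fin (Qk (s + 1)%nat (k - 1)%nat (x s k)).
Proof. unfold gapv. replace (s + 1 - 1)%nat with s by lia. reflexivity. Qed.

Lemma A_of_GAP s : (1 <= s <= T)%nat -> cv0 (gapv (s + 1)) -> cv0 (av s).
Proof.
  intros Hs Hg. destruct (step s Hs) as [D [HD Hst]].
  apply (cv0_comb _ _ s D Hs HD Hg). intros k Hk.
  destruct (Hst k Hk) as [_ [_ [_ [_ [_ [Ha [Hb [_ [_ _]]]]]]]]].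
  unfold av. rewrite gapv_shift. lra.
Qed.

Lemma comb_cube {m} (z w : vec m) h c : cube z h w -> 0 <= c <= 1 -> cube z h (comb c w z).
Proof.
  intros Hw Hc i Hi. rewrite comb_i.
  replace (c * w i + (1 - c) * z i - z i) with (c * (w i - z i)) by ring.
  rewrite Rabs_mult, Rabs_right by lra. specialize (Hw i Hi).
  pose proof (Rabs_pos (w i - z i)). nra.
Qed.

Lemma GAP_of_A s : (2 <= s <= T)%nat -> cv0 (av s) -> cv0 (gapv s).
Proof.
  intros Hs Ha.
  destruct (Q_cube s Hs) as [h [M [Hh HM]]].
  destruct (Q_lowb s Hs) as [mm Hmm].
  intros eps He.
  assert (HS : forall k, (1 <= k)%nat -> X (s - 1)%nat (x (s - 1)%nat k)) by (intros; apply fwd_X'; lia).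
  destruct (lag_lemma (X (s - 1)%nat) (fun w => fin (Q s w)) (fun k => x (s - 1)%nat k)
     (fun k => fin (uQ s k (x (s - 1)%nat k))) (fun k => beta s k)
     (fun k => fin (Qk s (k - 1)%nat (x (s - 1)%nat k))) h M mm) with (eps := eps) as [N HN]; auto.
  - apply X_cpt; lia.
  - intros z Hz w Hw. apply (HM z Hz w Hw).
  - intros z Hz w Hw c Hc.
    destruct (HM z Hz w Hw) as [Ew _].
    pose proof (Q_fin s z ltac:(lia) Hz) as Ez.
    pose proof (Q_conv s ltac:(lia) w z _ _ c Hc Ew Ez) as HC.
    destruct (HM z Hz (comb c w z) (comb_cube z w h c Hw Hc)) as [Ec _].
    rewrite Ec in HC. exact HC.
  - intros j Hj w Hw. pose proof (cut_le_Q s j Hs Hj w) as HC.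
    destruct (HM _ (HS j Hj) w Hw) as [Ew _]. rewrite Ew in HC. exact HC.
  - intros k j Hj Hjk. assert (Hjk' : (j <= k - 1)%nat) by lia. assert (Hk1 : (1 <= k)%nat) by lia.
    pose proof (cut_le_Qk s j (k - 1)%nat (x (s - 1)%nat k) Hs Hj Hjk' (HS k Hk1)) as HC.
    rewrite (Qk_fin s (k - 1)%nat (x (s - 1)%nat k)) in HC by (auto; lia). exact HC.
  - exists N. exact HN.
Qed.

Lemma GAP_last : cv0 (gapv (T + 1)).
Proof.
  intros eps He. exists 0%nat. intros k _. unfold gapv. rewrite HQT1, HQk_T1. simpl. lra.
Qed.

Lemma GAP_all : forall s, (2 <= s <= T + 1)%nat -> cv0 (gapv s).
Proof.
  assert (H : forall j s, (s + j = T + 1)%nat -> (2 <= s)%nat -> cv0 (gapv s)).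
  { induction j as [|j IHj]; intros s Hsj Hs.
    - replace s with (T + 1)%nat by lia. apply GAP_last.
    - apply GAP_of_A; [lia|]. apply A_of_GAP; [lia|]. apply IHj; lia. }
  intros s Hs. apply (H (T + 1 - s)%nat); lia.
Qed.

Lemma A_all s : (1 <= s <= T)%nat -> cv0 (av s).
Proof. intros Hs. apply A_of_GAP; auto. apply GAP_all; lia. Qed.
Local Notation cost := (cost_upto n x0 f).
Local Notation trj := (traj n x0).

Lemma traj_k k t : (1 <= k)%nat -> trj (fun s => x s k) t = x t k.
Proof. intros Hk. destruct t; simpl; auto. rewrite Hfwd0; auto. Qed.

Lemma fwd_X0 t k : (t <= T)%nat -> (1 <= k)%nat -> X t (x t k).
Proof. intros Ht Hk. pose proof (fwd_X' (S t) k ltac:(lia) Hk) as H. simpl in H. rewrite Nat.sub_0_r in H. exact H. Qed.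

Definition csum k t := rsum t (fun s => fin (f (S s) (x s k) (x (S s) k))).

Lemma cost_k k t : (1 <= k)%nat -> (t <= T)%nat -> cost (fun s => x s k) t = Finite (csum k t).
Proof.
  intros Hk. induction t; intros Ht; [reflexivity|].
  simpl cost_upto. rewrite IHt by lia. rewrite !traj_k by auto.
  rewrite (f_fin (S t) (x t k) (x (S t) k)); try lia.
  - reflexivity.
  - replace (S t - 1)%nat with t by lia. apply fwd_X0; lia.
  - apply fwd_X; lia.
Qed.

Lemma feasible_k k : (1 <= k)%nat -> feasible n p q x0 X g A B b T (fun s => x s k).
Proof.
  intros Hk t Ht. rewrite !traj_k by auto. apply Hfwd; auto.
Qed.

Lemma DP w : feasible n p q x0 X g A B b T w -> Rbar_le (Q 1%nat x0) (cost w T).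
Proof.
  intros Hw.
  assert (H : forall t, (t <= T)%nat -> Rbar_le (Q 1%nat x0) (Rbar_plus (cost w t) (Q (S t) (trj w t)))).
  { induction t; intros Ht.
    - simpl cost_upto. simpl traj. rewrite Rbar_plus_0_l. apply Rbar_le_refl.
    - eapply Rbar_le_trans; [apply IHt; lia|].
      simpl cost_upto. rewrite Rbar_plus_assoc. apply Rbar_plus_mono_r.
      apply (inf_lb _ _ _ (HQ (S t) (trj w t) ltac:(lia))). exists (trj w (S t)). split.
      + specialize (Hw (S t) ltac:(lia)). replace (S t - 1)%nat with t in Hw by lia. exact Hw.
      + replace (S t + 1)%nat with (S (S t)) by lia. reflexivity. }
  specialize (H T (le_n T)). replace (S T) with (T + 1)%nat in H by lia. rewrite HQT1, Rbar_plus_0 in H. exact H.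
Qed.

Definition Q1 := fin (Q 1%nat x0).

Lemma Q1_fin : Q 1%nat x0 = Finite Q1.
Proof.
  destruct (step 1 ltac:(lia)) as [D [_ Hst]]. destruct (Hst 2%nat ltac:(lia)) as [E _].
  simpl in E. rewrite Hfwd0 in E by lia. exact E.
Qed.

Definition ev s k := fin (f s (x (s - 1)%nat k) (x s k)) + fin (Q (s + 1)%nat (x s k)) - fin (Q s (x (s - 1)%nat k)).

Lemma ev_bounds s : (1 <= s <= T)%nat -> (forall k, (2 <= k)%nat -> 0 <= ev s k) /\ cv0 (ev s).
Proof.
  intros Hs. destruct (step s Hs) as [D [HD Hst]]. split.
  - intros k Hk. destruct (Hst k Hk) as [_ [_ [_ [_ [_ [Ha _]]]]]]. unfold ev. lra.
  - apply (cv0_comb (gapv (s + 1)) _ s D Hs HD (GAP_all (s + 1) ltac:(lia))).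
    intros k Hk. destruct (Hst k Hk) as [_ [_ [_ [_ [_ [Ha [Hb [_ [Hc _]]]]]]]]].
    rewrite gapv_shift. unfold ev. pose proof (Hlam_nn s k).
    assert (0 <= lam s k * vnorm (vsub (x s k) (xP s k)) ^ 2) by (apply Rmult_le_pos; auto; apply sq_nonneg').
    lra.
Qed.

Lemma telescope k t : (2 <= k)%nat -> (t <= T)%nat ->
  csum k t - Q1 + fin (Q (t + 1)%nat (x t k)) = rsum t (fun s => ev (S s) k).
Proof.
  intros Hk. induction t; intros Ht.
  - simpl. unfold csum. simpl. rewrite Hfwd0 by lia. unfold Q1. ring.
  - unfold csum in *. simpl rsum. rewrite <- IHt by lia. unfold ev.
    replace (S t - 1)%nat with t by lia. replace (S t + 1)%nat with (t + 1 + 1)%nat by lia.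
    replace (S t) with (t + 1)%nat by lia. ring.
Qed.

Definition Ecost k := csum k T - Q1.

Lemma Ecost_bounds : (forall k, (2 <= k)%nat -> 0 <= Ecost k) /\ cv0 Ecost.
Proof.
  assert (HE : forall k, (2 <= k)%nat -> Ecost k = rsum T (fun s => ev (S s) k)).
  { intros k Hk. rewrite <- telescope by auto. rewrite HQT1. unfold Ecost. simpl. ring. }
  assert (H : forall t, (t <= T)%nat -> (forall k, (2 <= k)%nat -> 0 <= rsum t (fun s => ev (S s) k)) /\
                cv0 (fun k => rsum t (fun s => ev (S s) k))).
  { induction t; intros Ht.
    - split; [intros; simpl; lra|]. intros eps He. exists 0%nat. intros; simpl; lra.
    - destruct IHt as [H1 H2]; [lia|]. destruct (ev_bounds (S t) ltac:(lia)) as [H3 H4]. split.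
      + intros k Hk. simpl. specialize (H1 k Hk). specialize (H3 k Hk). lra.
      + simpl. apply cv0_plus; auto. }
  destruct (H T (le_n T)) as [H1 H2]. split.
  - intros k Hk. rewrite HE; auto.
  - intros eps He. destruct (H2 eps He) as [N HN]. exists (Nat.max N 2). intros k Hk.
    rewrite HE by lia. apply HN; lia.
Qed.

Lemma opt_value : optimal_value n p q x0 X f g A B b T (Q 1%nat x0).
Proof.
  split.
  - intros w [z [Hz ->]]. apply DP; auto.
  - intros u Hu. rewrite Q1_fin. destruct Ecost_bounds as [_ HE].
    assert (Hk : forall k, (1 <= k)%nat -> Rbar_le u (Finite (csum k T))).
    { intros k Hk. rewrite <- cost_k by auto. apply Hu. exists (fun s => x s k). split; auto. apply feasible_k; auto. }
    destruct u as [r| |]; simpl; auto.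
    + apply Rnot_lt_le. intros Hlt. destruct (HE (r - Q1)) as [N HN]; [lra|].
      specialize (HN (Nat.max N 1)%nat ltac:(lia)). specialize (Hk (Nat.max N 1) ltac:(lia)).
      simpl in Hk. unfold Ecost in HN. lra.
    + specialize (Hk 1%nat (le_n _)). simpl in Hk. exact Hk.
Qed.
Lemma phi_ge (phi : nat -> nat) : (forall j, (phi j < phi (S j))%nat) -> forall j, (j <= phi j)%nat.
Proof. intros H. induction j; [lia|]. specialize (H j). lia. Qed.

Lemma Rbar_lt_fin c v : Rbar_lt (Finite c) (Finite v) -> c < v.
Proof. intros [H1 H2]. simpl in H1. destruct (Req_dec c v); [subst; tauto|lra]. Qed.

Lemma Rbar_lt_fin' c v : c < v -> Rbar_lt (Finite c) (Finite v).
Proof. intros H. split; [simpl; lra|]. intros E; injection E; lra. Qed.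

Lemma Rbar_split c a d : a <> m_infty -> d <> m_infty -> Rbar_lt (Finite c) (Rbar_plus a d) ->
  exists c1 c2, c = c1 + c2 /\ Rbar_lt (Finite c1) a /\ Rbar_lt (Finite c2) d.
Proof.
  intros Ha Hd H. destruct a as [a| |]; destruct d as [d| |]; try congruence.
  - simpl in H. apply Rbar_lt_fin in H.
    exists (a - (a + d - c) / 2), (d - (a + d - c) / 2). split; [field|]. split; apply Rbar_lt_fin'; lra.
  - exists (a - 1), (c - (a - 1)). split; [ring|]. split; [apply Rbar_lt_fin'; lra|].
    split; [simpl; auto|congruence].
  - exists (c - (d - 1)), (d - 1). split; [ring|]. split; [|apply Rbar_lt_fin'; lra].
    split; [simpl; auto|congruence].
  - exists c, 0. split; [ring|]. split; (split; [simpl; auto|congruence]).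
Qed.

Lemma cost_notm z t : (t <= T)%nat -> cost z t <> m_infty.
Proof.
  induction t; intros Ht; [simpl; congruence|]. simpl cost_upto.
  pose proof (IHt ltac:(lia)) as H1.
  match goal with |- Rbar_plus ?a (f ?s ?u ?v) <> _ =>
    pose proof (f_notm s u v ltac:(lia)) as H2; destruct a, (f s u v) end; simpl in *; congruence.
Qed.

Lemma lin_diff (a : nat -> R) (u v : vec n) e : (forall i, Rabs (u i - v i) <= e) ->
  Rabs (rsum n (fun j => a j * u j) - rsum n (fun j => a j * v j)) <= rsum n (fun j => Rabs (a j)) * e.
Proof.
  intros H.
  replace (rsum n (fun j => a j * u j) - rsum n (fun j => a j * v j))
    with (rsum n (fun j => a j * (u j - v j))).
  2:{ replace (rsum n (fun j => a j * u j) - rsum n (fun j => a j * v j))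
        with (1 * rsum n (fun j => a j * u j) + (-1) * rsum n (fun j => a j * v j)) by ring.
      rewrite <- rsum_lin. apply rsum_ext. intros; ring. }
  eapply Rle_trans; [apply rsum_abs|]. rewrite Rmult_comm, <- rsum_scal. apply rsum_le.
  intros j _. rewrite Rabs_mult. specialize (H j). pose proof (Rabs_pos (a j)). nra.
Qed.

Section Accum.
Variable xs : nat -> vec n.
Variable phi : nat -> nat.
Hypothesis Hphi : forall j, (phi j < phi (S j))%nat.
Hypothesis Hxs : forall t, (1 <= t <= T)%nat -> vconv (fun j => x t (phi j)) (xs t).

Lemma traj_conv t : (t <= T)%nat -> forall eps, eps > 0 -> exists N, forall j, (N <= j)%nat ->
  vnorm (vsub (x t (phi j)) (trj xs t)) < eps /\ (1 <= phi j)%nat.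
Proof.
  intros Ht eps He. pose proof (phi_ge phi Hphi) as Hge. destruct t.
  - exists 1%nat. intros j Hj. simpl. rewrite Hfwd0 by (specialize (Hge j); lia).
    rewrite vsub_self_norm. split; [lra|]. specialize (Hge j); lia.
  - destruct (Hxs (S t) ltac:(lia) eps He) as [N HN]. exists (Nat.max N 1). intros j Hj.
    split; [apply HN; lia|]. specialize (Hge j); lia.
Qed.

Lemma pair_conv t : (S t <= T)%nat -> forall d, d > 0 -> exists N, forall j, (N <= j)%nat ->
  vnorm (vsub (vpair (x t (phi j)) (x (S t) (phi j))) (vpair (trj xs t) (trj xs (S t)))) < d
  /\ (1 <= phi j)%nat.
Proof.
  intros Ht d Hd.
  assert (Hnn : 1 <= INR (n + n)) by (apply (le_INR 1); lia).
  set (e := d / (2 * INR (n + n))).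
  assert (He : e > 0) by (unfold e; apply Rdiv_lt_0_compat; lra).
  destruct (traj_conv t ltac:(lia) e He) as [N1 H1]. destruct (traj_conv (S t) Ht e He) as [N2 H2].
  exists (Nat.max N1 N2). intros j Hj. destruct (H1 j ltac:(lia)) as [A1 B1]. destruct (H2 j ltac:(lia)) as [A2 _].
  split; auto. eapply Rle_lt_trans; [apply pair_close; [lia | left; exact A1 | left; exact A2]|].
  unfold e. replace (INR (n + n) * (d / (2 * INR (n + n)))) with (d / 2) by (field; lra). lra.
Qed.

Lemma xs_feasible : feasible n p q x0 X g A B b T xs.
Proof.
  intros t Ht. pose proof (phi_ge phi Hphi) as Hge.
  replace (trj xs t) with (xs t) by (destruct t; [lia|reflexivity]).
  split; [|split].
  - apply (compact_closed (X t) (fun j => x t (phi (S j)))).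
    + apply X_cpt; auto.
    + intros j. apply fwd_X; auto. specialize (Hge (S j)); lia.
    + intros eps He. destruct (Hxs t Ht eps He) as [N HN]. exists N. intros k Hk. apply HN. lia.
  - intros i Hi.
    set (L := fun (y z : vec n) => rsum n (fun j => A t i j * z j) + rsum n (fun j => B t i j * y j)).
    change (L (trj xs (t - 1)) (xs t) = b t i).
    set (SA := rsum n (fun j => Rabs (A t i j)) + rsum n (fun j => Rabs (B t i j))).
    assert (HSA : 0 <= SA) by (unfold SA; pose proof (rsum_nonneg n (fun j => Rabs (A t i j))); pose proof (rsum_nonneg n (fun j => Rabs (B t i j))); assert (forall j, (j < n)%nat -> 0 <= Rabs (A t i j)) by (intros; apply Rabs_pos); assert (forall j, (j < n)%nat -> 0 <= Rabs (B t i j)) by (intros; apply Rabs_pos); intuition lra).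
    apply NNPP. intros Hne.
    set (del := Rabs (L (trj xs (t - 1)) (xs t) - b t i)).
    assert (Hdel : del > 0) by (apply Rabs_pos_lt; intros E; apply Hne; lra).
    set (e := del / (2 * (SA + 1))).
    assert (He : e > 0) by (unfold e; apply Rdiv_lt_0_compat; lra).
    destruct (traj_conv (t - 1) ltac:(lia) e He) as [N1 H1]. destruct (traj_conv t ltac:(lia) e He) as [N2 H2].
    set (j := Nat.max N1 N2). destruct (H1 j ltac:(lia)) as [A1 B1]. destruct (H2 j ltac:(lia)) as [A2 _].
    replace (trj xs t) with (xs t) in A2 by (destruct t; [lia|reflexivity]).
    destruct (Hfwd t (phi j) Ht B1) as [[_ [Hlin _]] _].
    specialize (Hlin i Hi). fold (L (x (t - 1)%nat (phi j)) (x t (phi j))) in Hlin.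
    assert (Hc1 : forall i', Rabs (x t (phi j) i' - xs t i') <= e).
    { intros i'. rewrite <- vsub_i. left. eapply Rle_lt_trans; [apply coord_le_norm|exact A2]. }
    assert (Hc2 : forall i', Rabs (x (t - 1)%nat (phi j) i' - trj xs (t - 1) i') <= e).
    { intros i'. rewrite <- vsub_i. left. eapply Rle_lt_trans; [apply coord_le_norm|exact A1]. }
    pose proof (lin_diff (fun j' => A t i j') _ _ e Hc1) as D1.
    pose proof (lin_diff (fun j' => B t i j') _ _ e Hc2) as D2.
    assert (Habs : Rabs (L (x (t - 1)%nat (phi j)) (x t (phi j)) - L (trj xs (t - 1)) (xs t)) <= SA * e).
    { unfold L, SA. 
      replace (rsum n (fun j0 => A t i j0 * x t (phi j) j0) + rsum n (fun j0 => B t i j0 * x (t - 1)%nat (phi j) j0) -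
               (rsum n (fun j0 => A t i j0 * xs t j0) + rsum n (fun j0 => B t i j0 * trj xs (t - 1) j0)))
        with ((rsum n (fun j0 => A t i j0 * x t (phi j) j0) - rsum n (fun j0 => A t i j0 * xs t j0)) +
              (rsum n (fun j0 => B t i j0 * x (t - 1)%nat (phi j) j0) - rsum n (fun j0 => B t i j0 * trj xs (t - 1) j0))) by ring.
      eapply Rle_trans; [apply Rabs_triang|]. lra. }
    rewrite Hlin in Habs.
    rewrite <- Rabs_Ropp in Habs. replace (- (b t i - L (trj xs (t - 1)) (xs t))) with (L (trj xs (t - 1)) (xs t) - b t i) in Habs by ring.
    fold del in Habs.
    assert (SA * e < del).
    { unfold e. apply (Rmult_lt_reg_l (2 * (SA + 1))); [lra|].
      replace (2 * (SA + 1) * (SA * (del / (2 * (SA + 1))))) with (SA * del) by (field; lra). nra. }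
    lra.
  - intros i Hi. apply Rnot_lt_le. intros Hpos.
    destruct (HH0 t Ht) as [_ [_ [Hgc _]]]. destruct (Hgc i Hi) as [_ Hlsc].
    destruct (Hlsc (vpair (trj xs (t - 1)) (xs t)) 0) as [d [Hd Hdd]].
    { rewrite uncurry2_pair. apply Rbar_lt_fin'. exact Hpos. }
    destruct (pair_conv (t - 1) ltac:(lia) d Hd) as [N HN].
    destruct (HN N (le_n _)) as [HN1 HN2].
    replace (S (t - 1)) with t in HN1 by lia.
    replace (trj xs t) with (xs t) in HN1 by (destruct t; [lia|reflexivity]).
    specialize (Hdd _ HN1). rewrite uncurry2_pair in Hdd. apply Rbar_lt_fin in Hdd.
    destruct (Hfwd t (phi N) Ht HN2) as [[_ [_ Hg]] _]. specialize (Hg i Hi). lra.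
Qed.

Lemma lsc_claim t : (t <= T)%nat -> forall c, Rbar_lt (Finite c) (cost xs t) ->
  exists N, forall j, (N <= j)%nat -> c < csum (phi j) t.
Proof.
  induction t; intros Ht c Hc.
  - simpl in Hc. apply Rbar_lt_fin in Hc. exists 0%nat. intros. unfold csum. simpl. lra.
  - cbn [cost_upto] in Hc. destruct (Rbar_split c _ _ (cost_notm xs t ltac:(lia)) (f_notm (S t) (trj xs t) (trj xs (S t)) ltac:(lia)) Hc)
      as [c1 [c2 [-> [H1 H2]]]].
    destruct (IHt ltac:(lia) c1 H1) as [N1 HN1].
    destruct (HH0 (S t) ltac:(lia)) as [_ [[_ [_ Hlsc]] _]].
    destruct (Hlsc (vpair (trj xs t) (trj xs (S t))) c2) as [d [Hd Hdd]].
    { rewrite uncurry2_pair. exact H2. }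
    destruct (pair_conv t Ht d Hd) as [N2 HN2].
    exists (Nat.max N1 N2). intros j Hj. destruct (HN2 j ltac:(lia)) as [A1 B1].
    specialize (Hdd _ A1). rewrite uncurry2_pair in Hdd.
    rewrite (f_fin (S t) (x t (phi j)) (x (S t) (phi j))) in Hdd; try lia.
    + apply Rbar_lt_fin in Hdd. specialize (HN1 j ltac:(lia)). unfold csum in *. simpl. lra.
    + replace (S t - 1)%nat with t by lia. apply fwd_X0; lia.
    + apply fwd_X; lia.
Qed.

Lemma xs_optimal : optimal_solution n p q x0 X f g A B b T xs.
Proof.
  split; [apply xs_feasible|]. intros w Hw.
  eapply Rbar_le_trans; [|apply DP; auto]. rewrite Q1_fin.
  apply NNPP. intros Hn'.
  assert (Heta : exists eta, eta > 0 /\ Rbar_lt (Finite (Q1 + eta)) (cost xs T)).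
  { destruct (cost xs T) as [v| |] eqn:E; simpl in Hn'.
    - exists ((v - Q1) / 2). split; [lra|]. apply Rbar_lt_fin'. lra.
    - exists 1. split; [lra|]. split; [simpl; auto|congruence].
    - tauto. }
  destruct Heta as [eta [He Hlt]].
  destruct (lsc_claim T (le_n _) _ Hlt) as [N1 HN1].
  destruct Ecost_bounds as [_ HE]. destruct (HE eta He) as [N2 HN2].
  pose proof (phi_ge phi Hphi) as Hge.
  set (j := Nat.max N1 N2). specialize (HN1 j ltac:(lia)). specialize (HN2 (phi j) ltac:(specialize (Hge j); lia)).
  unfold Ecost in HN2. lra.
Qed.

End Accum.
Lemma vinner_self_zero (a y : vec n) : vinner a (vsub y y) = 0.
Proof.
  unfold vinner. rewrite (rsum_ext _ _ (fun _ => 0)). rewrite rsum_const; ring.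
  intros i _. rewrite vsub_i. ring.
Qed.

Lemma Rbar_max_eq a r : Rbar_le a (Finite r) -> Rbar_max a (Finite r) = Finite r.
Proof. destruct a; simpl; try tauto. intros. f_equal. apply Rmax_right; auto. Qed.

Lemma Q_eq_uQ_T k y : (1 <= k)%nat -> Q T y = uQ T k y.
Proof.
  intros Hk. apply Rbar_le_antisym_fin.
  - apply (inf_glb _ _ _ (HuQ T k y ltac:(lia) Hk)). intros w [z [Hz ->]].
    rewrite HQk_T1. rewrite <- (HQT1 z). apply (inf_lb _ _ _ (HQ T y ltac:(lia))). exists z; split; auto.
  - apply uQ_le_Q'; auto; lia.
Qed.

Lemma main_in_section :
  (forall k, (1 <= k)%nat -> Q (T + 1)%nat (x T k) = Qk (T + 1)%nat k (x T k)) /\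
  (forall k, (1 <= k)%nat ->
     Q T (x (T - 1)%nat k) = uQ T k (x (T - 1)%nat k) /\
     ((2 <= T)%nat -> Q T (x (T - 1)%nat k) = Qk T k (x (T - 1)%nat k))) /\
  (forall t, (2 <= t <= T - 1)%nat ->
     Rbar_diff_cv0 (fun k => Q t (x (t - 1)%nat k)) (fun k => Qk t k (x (t - 1)%nat k)) /\
     Rbar_diff_cv0 (fun k => Q t (x (t - 1)%nat k)) (fun k => uQ t k (x (t - 1)%nat k))) /\
  (Rbar_cv (fun k => uQ 1%nat k x0) (Q 1%nat x0) /\
   Rbar_cv (fun k => Fbar n f Qk lam 1%nat k x0 (x 1%nat k) (xP 1%nat k)) (Q 1%nat x0) /\
   optimal_value n p q x0 X f g A B b T (Q 1%nat x0)) /\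
  (forall (xs : nat -> vec n) (phi : nat -> nat),
     (forall j, (phi j < phi (S j))%nat) ->
     (forall t, (1 <= t <= T)%nat -> vconv (fun j => x t (phi j)) (xs t)) ->
     optimal_solution n p q x0 X f g A B b T xs).
Proof.
  split; [|split; [|split; [|split]]].
  - intros k Hk. rewrite HQT1, HQk_T1. reflexivity.
  - intros k Hk. split; [apply Q_eq_uQ_T; auto|]. intros HT2.
    rewrite Q_eq_uQ_T with (k := k) by auto.
    destruct (cut_sub T k ltac:(lia) Hk) as [Hr _]. rewrite Hr.
    rewrite Qk_eq by (auto; try lia; apply fwd_X'; lia).
    unfold cutv at 1. rewrite vinner_self_zero, Rplus_0_r. symmetry. apply Rbar_max_eq.
    rewrite <- Hr, <- (Q_eq_uQ_T k) by auto. apply valid; [lia|]. apply fwd_X'; lia.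
  - intros t Ht. pose proof (A_all t ltac:(lia)) as HA.
    destruct (step t ltac:(lia)) as [D [_ Hst]].
    split; intros eps He; destruct (HA eps He) as [N HN]; exists (Nat.max N 2); intros k Hk;
      specialize (HN k ltac:(lia)); destruct (Hst k ltac:(lia)) as [EQ [EuQ [_ [_ [_ [_ [_ [HuQ2 _]]]]]]]];
      unfold av in HN.
    + set (y := x (t - 1)%nat k) in *.
      assert (Hy : X (t - 1)%nat y) by (apply fwd_X'; lia).
      pose proof (Qk_fin t k y ltac:(lia) ltac:(lia) Hy) as EQk.
      pose proof (valid k t ltac:(lia) y Hy) as HV. rewrite EQk, EQ in HV. simpl in HV.
      pose proof (cut_le_Qk t k k y ltac:(lia) ltac:(lia) (le_n _) Hy) as HC. rewrite EQk in HC. simpl in HC.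
      unfold cutv in HC. unfold y in HC. rewrite vinner_self_zero, Rplus_0_r in HC. fold y in HC.
      unfold r_cut in HC. fold y in HC.
      exists (fin (Q t y)), (fin (Qk t k y)). split; auto. split; auto.
      rewrite Rabs_right by lra. lra.
    + exists (fin (Q t (x (t - 1)%nat k))), (fin (uQ t k (x (t - 1)%nat k))). split; auto. split; auto.
      rewrite Rabs_right by lra. lra.
  - split; [|split; [|apply opt_value]].
    + rewrite Q1_fin. intros eps He. destruct (A_all 1 ltac:(lia) eps He) as [N HN].
      destruct (step 1 ltac:(lia)) as [D [_ Hst]].
      exists (Nat.max N 2). intros k Hk. specialize (HN k ltac:(lia)).
      destruct (Hst k ltac:(lia)) as [EQ [EuQ [_ [_ [_ [_ [_ [HuQ2 _]]]]]]]].
      unfold av in HN. simpl in EQ, EuQ, HN, HuQ2. rewrite Hfwd0 in EQ, EuQ, HN, HuQ2 by lia.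
      exists (fin (uQ 1%nat k x0)). split; auto. unfold Q1.
      rewrite Rabs_left1 by lra. lra.
    + rewrite Q1_fin. destruct (step 1 ltac:(lia)) as [D [HD Hst]].
      assert (Hc : cv0 (fun k => Rabs (fin (Fbar n f Qk lam 1%nat k x0 (x 1%nat k) (xP 1%nat k)) - Q1))).
      { apply (cv0_comb (gapv 2) _ 1 D ltac:(lia) HD (GAP_all 2 ltac:(lia))).
        intros k Hk. destruct (Hst k Hk) as [EQ [_ [Ef [EQ1 [EQk [Ha [_ [_ [Hc Hd]]]]]]]]].
        change (1 - 1)%nat with 0%nat in *. change (1 + 1)%nat with 2%nat in *.
        rewrite Hfwd0 in EQ, Ef, Ha, Hc by lia.
        rewrite (Fbar_fin _ _ _ _ _ _ _ Ef EQk). simpl fin.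
        unfold gapv. change (2 - 1)%nat with 1%nat. unfold Q1.
        pose proof (Hlam_nn 1 k). assert (0 <= lam 1%nat k * vnorm (vsub (x 1%nat k) (xP 1%nat k)) ^ 2) by (apply Rmult_le_pos; auto; apply sq_nonneg').
        assert (0 <= lam 1%nat k * D) by (apply Rmult_le_pos; auto).
        apply Rabs_le. split; lra. }
      intros eps He. destruct (Hc eps He) as [N HN]. exists (Nat.max N 2). intros k Hk.
      specialize (HN k ltac:(lia)). destruct (Hst k ltac:(lia)) as [_ [_ [Ef [_ [EQk _]]]]].
      simpl in Ef, EQk. rewrite Hfwd0 in Ef by lia.
      rewrite (Fbar_fin _ _ _ _ _ _ _ Ef EQk) in HN |- *. simpl in HN.
      eexists; split; [reflexivity|]. exact HN.
  - intros xs phi Hphi Hxs. exact (xs_optimal xs phi Hphi Hxs).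
Qed.

End Main.
Theorem mainTheorem3
  (n p q T : nat) (Hn : (1 <= n)%nat) (Hp : (1 <= p)%nat) (Hq : (1 <= q)%nat)
  (HT : (1 <= T)%nat)
  (x0 : vec n) (X : nat -> vec n -> Prop) (f : nat -> vec n -> vec n -> Rbar)
  (g : nat -> nat -> vec n -> vec n -> R) (A B : nat -> nat -> nat -> R)
  (b : nat -> vec q)
  (HX0 : forall y, X 0%nat y <-> y = x0)
  (HH0 : H0 n p q X f g A B b T)
  (* cost-to-go functions Q_t, t = 1..T+1 *)
  (Q : nat -> vec n -> Rbar)
  (HQT1 : forall y, Q (T + 1)%nat y = Finite 0)
  (HQ : forall t y, (1 <= t <= T)%nat ->
     Rbar_is_inf (fun v => exists x, Xset n p q X g A B b t y x /\
                                     v = Rbar_plus (f t y x) (Q (t + 1)%nat x))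
                 (Q t y))
  (* REDDP parameters *)
  (lam : nat -> nat -> R) (xP : nat -> nat -> vec n)
  (Hlam_nn : forall t k, 0 <= lam t k)
  (Hlam1 : forall t, lam t 1%nat = 0)
  (HlamT : forall k, (1 <= k)%nat -> lam T k = 0)
  (Hlam_lim : forall t, (1 <= t <= T - 1)%nat -> Un_cv (fun k => lam t k) 0)
  (HxP : forall t k, (1 <= t <= T)%nat -> (1 <= k)%nat -> X t (xP t k))
  (* REDDP iterates *)
  (x : nat -> nat -> vec n) (Qk : nat -> nat -> vec n -> Rbar)
  (uQ : nat -> nat -> vec n -> Rbar) (beta : nat -> nat -> vec n)
  (* initialization *)
  (HQk_T1 : forall k y, Qk (T + 1)%nat k y = Finite 0)
  (HQk0 : forall t y, (2 <= t <= T)%nat -> X (t - 1)%nat y ->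
     Rbar_le (Qk t 0%nat y) (Q t y) /\ Qk t 0%nat y <> p_infty)
  (* forward pass *)
  (Hfwd0 : forall k, (1 <= k)%nat -> x 0%nat k = x0)
  (Hfwd : forall t k, (1 <= t <= T)%nat -> (1 <= k)%nat ->
     Xset n p q X g A B b t (x (t - 1)%nat k) (x t k) /\
     forall z, Xset n p q X g A B b t (x (t - 1)%nat k) z ->
       Rbar_le (Fbar n f Qk lam t k (x (t - 1)%nat k) (x t k) (xP t k))
               (Fbar n f Qk lam t k (x (t - 1)%nat k) z (xP t k)))
  (* underline Q_t^k *)
  (HuQ : forall t k y, (1 <= t <= T)%nat -> (1 <= k)%nat ->
     Rbar_is_inf (fun v => exists z, Xset n p q X g A B b t y z /\
                                     v = Rbar_plus (f t y z) (Qk (t + 1)%nat k z))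
                 (uQ t k y))
  (* backward pass *)
  (Hbwd : forall t k, (2 <= t <= T)%nat -> (1 <= k)%nat ->
     subgrad (uQ t k) (x (t - 1)%nat k) (beta t k) /\
     forall y, X (t - 1)%nat y ->
       Qk t k y = Rbar_max (Qk t (k - 1)%nat y)
                    (Rbar_plus (uQ t k (x (t - 1)%nat k))
                       (Finite (vinner (beta t k) (vsub y (x (t - 1)%nat k))))))
  :
  (forall k, (1 <= k)%nat -> Q (T + 1)%nat (x T k) = Qk (T + 1)%nat k (x T k)) /\
  (forall k, (1 <= k)%nat ->
     Q T (x (T - 1)%nat k) = uQ T k (x (T - 1)%nat k) /\
     ((2 <= T)%nat -> Q T (x (T - 1)%nat k) = Qk T k (x (T - 1)%nat k))) /\
  (forall t, (2 <= t <= T - 1)%nat ->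
     Rbar_diff_cv0 (fun k => Q t (x (t - 1)%nat k)) (fun k => Qk t k (x (t - 1)%nat k)) /\
     Rbar_diff_cv0 (fun k => Q t (x (t - 1)%nat k)) (fun k => uQ t k (x (t - 1)%nat k))) /\
  (* (i) *)
  (Rbar_cv (fun k => uQ 1%nat k x0) (Q 1%nat x0) /\
   Rbar_cv (fun k => Fbar n f Qk lam 1%nat k x0 (x 1%nat k) (xP 1%nat k)) (Q 1%nat x0) /\
   optimal_value n p q x0 X f g A B b T (Q 1%nat x0)) /\
  (* (ii) *)
  (forall (xs : nat -> vec n) (phi : nat -> nat),
     (forall j, (phi j < phi (S j))%nat) ->
     (forall t, (1 <= t <= T)%nat -> vconv (fun j => x t (phi j)) (xs t)) ->
     optimal_solution n p q x0 X f g A B b T xs).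
Proof.
  intros. eapply main_in_section; eassumption.
Qed.
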